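(* Let $A_1,B_1,A_2,B_2>0$ and let $M\subset\mathbb C^2$ be the ellipsoid $\{A_1x_1^2+B_1y_1^2+A_2x_2^2+B_2y_2^2=1\}$, where $z_j=x_j+iy_j$. Equip $M$ with the CR structure induced from $\mathbb C^2$ and the contact form $\theta=\frac{i}{2}(\bar\partial u-\partial u)|_M$, where $u=A_1x_1^2+B_1y_1^2+A_2x_2^2+B_2y_2^2-1$. Then the Tanaka–Webster curvature $R$ of $(M,\theta)$ is strictly positive at every point of $M$.
   Context: Take $Z_1$ to be a frame of $T_{1,0}M$, $\{\theta,\theta^1,\theta^{\bar1}\}$ the coframe dual to $\{T,Z_1,Z_{\bar1}\}$ with $T$ the Reeb field of $\theta$, and $d\theta=ih_{1\bar1}\theta^1\wedge\theta^{\bar1}$ with $h_{1\bar1}>0$. The Tanaka–Webster connection form $\theta_1{}^1$ is determined by $d\theta^1=\theta^1\wedge\theta_1{}^1+\theta\wedge\tau^1$, $\tau^1\equiv0 \bmod \theta^{\bar1}$, $\theta_1{}^1+\theta_{\bar1}{}^{\bar1}=h^{1\bar1}dh_{1\bar1}$ (with $h^{1\bar1}=1/h_{1\bar1}$). The Webster curvature $R$ is defined by $d\theta_1{}^1\equiv R\,h_{1\bar1}\theta^1\wedge\theta^{\bar1}\pmod\theta$; it depends only on $(J,\theta)$ and not on the choice of frame. *)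

(* Defs.v *)
From Stdlib Require Import Reals.
From Coquelicot Require Import Coquelicot.
Open Scope C_scope.

(** Points of C^2 = R^4, in real coordinates (x1, y1, x2, y2), z_j = x_j + i y_j. *)
Definition pt : Type := (R * R * R * R)%type.

(** real coordinate k (0:x1, 1:y1, 2:x2, 3:y2) *)
Definition coord (p : pt) (k : nat) : R :=
  match k with
  | 0 => (fst (fst (fst p))) | 1 => (snd (fst (fst p))) | 2 => (snd (fst p)) | _ => (snd p) end.

Definition upd (p : pt) (k : nat) (t : R) : pt :=
  match k with
  | 0 => (t, (snd (fst (fst p))), (snd (fst p)), (snd p))
  | 1 => ((fst (fst (fst p))), t, (snd (fst p)), (snd p))
  | 2 => ((fst (fst (fst p))), (snd (fst (fst p))), t, (snd p))
  | _ => ((fst (fst (fst p))), (snd (fst (fst p))), (snd (fst p)), t) end.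

Definition CFun := pt -> C.

Definition pd (k : nat) (f : CFun) (p : pt) : C :=
  (Derive (fun t => Re (f (upd p k t))) (coord p k),
   Derive (fun t => Im (f (upd p k t))) (coord p k)).

Definition C1 (f : CFun) : Prop :=
  forall (k : nat) (p : pt), (k < 4)%nat ->
    ex_derive (fun t => Re (f (upd p k t))) (coord p k) /\
    ex_derive (fun t => Im (f (upd p k t))) (coord p k) /\
    continuous (pd k f) p.

Definition dz1  (f : CFun) (p : pt) : C := / 2 * (pd 0 f p - Ci * pd 1 f p).
Definition dzb1 (f : CFun) (p : pt) : C := / 2 * (pd 0 f p + Ci * pd 1 f p).
Definition dz2  (f : CFun) (p : pt) : C := / 2 * (pd 2 f p - Ci * pd 3 f p).
Definition dzb2 (f : CFun) (p : pt) : C := / 2 * (pd 2 f p + Ci * pd 3 f p).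

(** complex vector fields  a1 d/dz1 + a2 d/dz2 + b1 d/dzbar1 + b2 d/dzbar2 *)
Record VF := mkVF { vz1 : CFun; vz2 : CFun; vzb1 : CFun; vzb2 : CFun }.

Definition VF_C1 (X : VF) : Prop :=
  C1 (vz1 X) /\ C1 (vz2 X) /\ C1 (vzb1 X) /\ C1 (vzb2 X).

Definition app (X : VF) (f : CFun) : CFun := fun p =>
  vz1 X p * dz1 f p + vz2 X p * dz2 f p + vzb1 X p * dzb1 f p + vzb2 X p * dzb2 f p.

Definition vconj (X : VF) : VF :=
  mkVF (fun p => Cconj (vzb1 X p)) (fun p => Cconj (vzb2 X p))
       (fun p => Cconj (vz1 X p)) (fun p => Cconj (vz2 X p)).

(** Lie bracket (the coordinate fields d/dz_j, d/dzbar_j commute) *)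
Definition bracket (X Y : VF) : VF :=
  mkVF (fun p => app X (vz1 Y) p - app Y (vz1 X) p)
       (fun p => app X (vz2 Y) p - app Y (vz2 X) p)
       (fun p => app X (vzb1 Y) p - app Y (vzb1 X) p)
       (fun p => app X (vzb2 Y) p - app Y (vzb2 X) p).

(** complex 1-forms  c1 dz1 + c2 dz2 + e1 dzbar1 + e2 dzbar2 *)
Record Form := mkForm { fz1 : CFun; fz2 : CFun; fzb1 : CFun; fzb2 : CFun }.

Definition Form_C1 (a : Form) : Prop :=
  C1 (fz1 a) /\ C1 (fz2 a) /\ C1 (fzb1 a) /\ C1 (fzb2 a).

Definition ev (a : Form) (X : VF) : CFun := fun p =>
  fz1 a p * vz1 X p + fz2 a p * vz2 X p + fzb1 a p * vzb1 X p + fzb2 a p * vzb2 X p.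

(** conjugate form: (conj a)(X) = conj (a (conj X)) *)
Definition fconj (a : Form) : Form :=
  mkForm (fun p => Cconj (fzb1 a p)) (fun p => Cconj (fzb2 a p))
         (fun p => Cconj (fz1 a p)) (fun p => Cconj (fz2 a p)).

(** exterior derivative of a 1-form, evaluated on two vector fields *)
Definition d1 (a : Form) (X Y : VF) : CFun := fun p =>
  app X (ev a Y) p - app Y (ev a X) p - ev a (bracket X Y) p.

Definition wedge (a b : Form) (X Y : VF) : CFun := fun p =>
  ev a X p * ev b Y p - ev a Y p * ev b X p.

Definition fscale (c : CFun) (a : Form) : Form :=
  mkForm (fun p => c p * fz1 a p) (fun p => c p * fz2 a p)
         (fun p => c p * fzb1 a p) (fun p => c p * fzb2 a p).

Section Ellipsoid.
Variables A1 B1 A2 B2 : R.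

Definition uE : CFun := fun p =>
  RtoC (A1 * (coord p 0)^2 + B1 * (coord p 1)^2 + A2 * (coord p 2)^2
        + B2 * (coord p 3)^2 - 1)%R.

Definition onM (p : pt) : Prop := uE p = RtoC 0.

Definition thetaE : Form :=
  mkForm (fun p => - (Ci / 2) * dz1 uE p) (fun p => - (Ci / 2) * dz2 uE p)
         (fun p => (Ci / 2) * dzb1 uE p) (fun p => (Ci / 2) * dzb2 uE p).

(** the frame Z_1 = u_{z2} d/dz1 - u_{z1} d/dz2 of T_{1,0}M, and Z_{bar 1} *)
Definition Z1 : VF :=
  mkVF (fun p => dz2 uE p) (fun p => - dz1 uE p) (fun _ => RtoC 0) (fun _ => RtoC 0).
Definition Z1b : VF := vconj Z1.

(** h_{1 bar1}, from d theta = i h theta^1 /\ theta^{bar1} evaluated on (Z_1, Z_{bar1}) *)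
Definition hE : CFun := fun p => - Ci * d1 thetaE Z1 Z1b p.

(** T is (a C^1 ambient extension of) the Reeb field of theta on M *)
Definition IsReeb (T : VF) : Prop :=
  VF_C1 T /\
  (forall p, vzb1 T p = Cconj (vz1 T p) /\ vzb2 T p = Cconj (vz2 T p)) /\
  (forall p, onM p ->
     app T uE p = RtoC 0 /\ ev thetaE T p = RtoC 1 /\
     d1 thetaE T Z1 p = RtoC 0 /\ d1 thetaE T Z1b p = RtoC 0).

(** th1 is (a C^1 ambient extension of) theta^1 in the coframe
    {theta, theta^1, theta^{bar1}} dual to {T, Z_1, Z_{bar1}} on M *)
Definition IsCoframe (T : VF) (th1 : Form) : Prop :=
  Form_C1 th1 /\
  (forall p, onM p ->
     ev th1 T p = RtoC 0 /\ ev th1 Z1 p = RtoC 1 /\ ev th1 Z1b p = RtoC 0).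

(** om is (a C^1 ambient extension of) the Tanaka-Webster connection form
    theta_1^1 : d theta^1 = theta^1 /\ om + theta /\ tau^1 with
    tau^1 = Atau theta^{bar1}, and om + conj om = h^{-1} dh  (on TM) *)
Definition IsTWconn (T : VF) (th1 om : Form) : Prop :=
  Form_C1 om /\
  exists Atau : CFun,
  forall p, onM p ->
    (forall X Y, (X, Y) = (Z1, Z1b) \/ (X, Y) = (Z1, T) \/ (X, Y) = (Z1b, T) ->
       d1 th1 X Y p =
         wedge th1 om X Y p + wedge thetaE (fscale Atau (fconj th1)) X Y p) /\
    (forall X, X = Z1 \/ X = Z1b \/ X = T ->
       ev om X p + ev (fconj om) X p = app X hE p / hE p).

(** Rc is the Webster curvature: d om = Rc h theta^1 /\ theta^{bar1} mod theta on TM,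
    i.e. d om - Rc h theta^1 /\ theta^{bar1} = theta /\ beta for some 1-form beta *)
Definition IsWebsterCurv (T : VF) (th1 om : Form) (Rc : pt -> R) : Prop :=
  forall p, onM p -> exists beta : Form,
    forall X Y, (X, Y) = (Z1, Z1b) \/ (X, Y) = (Z1, T) \/ (X, Y) = (Z1b, T) ->
      d1 om X Y p - RtoC (Rc p) * hE p * wedge th1 (fconj th1) X Y p
        = wedge thetaE beta X Y p.
End Ellipsoid.

(* Main.v *)
Require Import Defs.
From Stdlib Require Import Reals Lra Psatz FunctionalExtensionality.
From Coquelicot Require Import Coquelicot.
Open Scope R_scope.

Definition dR (k : nat) (F : pt -> R) (q : pt) : R :=
  Derive (fun t => F (upd q k t)) (coord q k).
Definition DR (F : pt -> R) : Prop :=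
  forall k q, (k < 4)%nat -> ex_derive (fun t => F (upd q k t)) (coord q k).

Lemma ballR (x e y : R) : ball x e y <-> Rabs (y - x) < e.
Proof. reflexivity. Qed.

Definition nearp (d : R) (p q : pt) : Prop :=
  Rabs (coord q 0 - coord p 0) < d /\ Rabs (coord q 1 - coord p 1) < d /\
  Rabs (coord q 2 - coord p 2) < d /\ Rabs (coord q 3 - coord p 3) < d.

Lemma ball_pt (p q : pt) (d : R) : nearp d p q -> ball p d q.
Proof.
  destruct p as [[[p0 p1] p2] p3]; destruct q as [[[q0 q1] q2] q3].
  unfold nearp; simpl. intros [H0 [H1 [H2 H3]]].
  repeat split; assumption.
Qed.

Lemma pt_ball (p q : pt) (d : R) : ball p d q -> nearp d p q.
Proof.
  destruct p as [[[p0 p1] p2] p3]; destruct q as [[[q0 q1] q2] q3].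
  unfold nearp; simpl. intros [[[H0 H1] H2] H3].
  repeat split; assumption.
Qed.

Lemma cont_eps (F : pt -> R) (p : pt) : continuous F p ->
  forall eps, 0 < eps -> exists d, 0 < d /\ forall q, nearp d p q -> Rabs (F q - F p) < eps.
Proof.
  intros Hc eps He.
  destruct (proj1 (filterlim_locally F (F p)) Hc (mkposreal eps He)) as [d Hd].
  exists d. split. apply cond_pos. intros q Hq. apply Hd. now apply ball_pt.
Qed.

Lemma eps_cont (F : pt -> R) (p : pt) :
  (forall eps, 0 < eps -> exists d, 0 < d /\ forall q, nearp d p q -> Rabs (F q - F p) < eps)
  -> continuous F p.
Proof.
  intros H. apply (proj2 (filterlim_locally F (F p))). intros eps.
  destruct (H eps (cond_pos eps)) as [d [Hd Hq]].
  exists (mkposreal d Hd). intros q Hb. apply Hq. now apply pt_ball.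
Qed.

Lemma mvt_step (f : R -> R) (a b d : R) :
  (forall c, ex_derive f c) -> Rabs (b - a) < d ->
  exists c, Rabs (c - a) < d /\ f b - f a = Derive f c * (b - a).
Proof.
  intros Hd Hb.
  destruct (MVT_cor4 f (Derive f) a (Rabs (b - a))) with (b := b) as [c [Hc1 Hc2]].
  - intros c _. apply Derive_correct. apply Hd.
  - lra.
  - exists c. split. lra. exact Hc1.
Qed.

Lemma diffpt (F : pt -> R) (p : pt) : DR F ->
  (forall k, (k < 4)%nat -> continuous (dR k F) p) ->
  forall eps, 0 < eps -> exists d, 0 < d /\ forall q, nearp d p q ->
   Rabs (F q - F p - ((coord q 0 - coord p 0) * dR 0 F p + (coord q 1 - coord p 1) * dR 1 F p
         + (coord q 2 - coord p 2) * dR 2 F p + (coord q 3 - coord p 3) * dR 3 F p))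
   <= eps * (Rabs (coord q 0 - coord p 0) + Rabs (coord q 1 - coord p 1)
             + Rabs (coord q 2 - coord p 2) + Rabs (coord q 3 - coord p 3)).
Proof.
  intros HD Hc eps He.
  destruct (cont_eps _ _ (Hc 0%nat ltac:(lia)) eps He) as [d0 [Hd0 C0]].
  destruct (cont_eps _ _ (Hc 1%nat ltac:(lia)) eps He) as [d1 [Hd1 C1']].
  destruct (cont_eps _ _ (Hc 2%nat ltac:(lia)) eps He) as [d2 [Hd2 C2]].
  destruct (cont_eps _ _ (Hc 3%nat ltac:(lia)) eps He) as [d3 [Hd3 C3]].
  exists (Rmin (Rmin d0 d1) (Rmin d2 d3)). split.
  { apply Rmin_pos; apply Rmin_pos; assumption. }
  intros q Hq.
  assert (Hm1 := Rmin_l (Rmin d0 d1) (Rmin d2 d3)).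
  assert (Hm2 := Rmin_r (Rmin d0 d1) (Rmin d2 d3)).
  assert (Hm3 := Rmin_l d0 d1). assert (Hm4 := Rmin_r d0 d1).
  assert (Hm5 := Rmin_l d2 d3). assert (Hm6 := Rmin_r d2 d3).
  set (d := Rmin (Rmin d0 d1) (Rmin d2 d3)) in *.
  destruct p as [[[p0 p1] p2] p3]; destruct q as [[[q0 q1] q2] q3].
  unfold nearp in Hq; simpl in Hq. destruct Hq as [Q0 [Q1 [Q2 Q3]]].
  simpl.
  destruct (mvt_step (fun t => F (t, p1, p2, p3)) p0 q0 d) as [c0 [E0 M0]].
  { intros c. exact (HD 0%nat (c,p1,p2,p3) ltac:(lia)). } exact Q0.
  destruct (mvt_step (fun t => F (q0, t, p2, p3)) p1 q1 d) as [c1 [E1 M1]].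
  { intros c. exact (HD 1%nat (q0,c,p2,p3) ltac:(lia)). } exact Q1.
  destruct (mvt_step (fun t => F (q0, q1, t, p3)) p2 q2 d) as [c2 [E2 M2]].
  { intros c. exact (HD 2%nat (q0,q1,c,p3) ltac:(lia)). } exact Q2.
  destruct (mvt_step (fun t => F (q0, q1, q2, t)) p3 q3 d) as [c3 [E3 M3]].
  { intros c. exact (HD 3%nat (q0,q1,q2,c) ltac:(lia)). } exact Q3.
  assert (K0 : Rabs (dR 0 F (c0,p1,p2,p3) - dR 0 F (p0,p1,p2,p3)) < eps).
  { apply C0. unfold nearp; simpl. repeat split; rewrite ?Rminus_diag, ?Rabs_R0; lra. }
  assert (K1 : Rabs (dR 1 F (q0,c1,p2,p3) - dR 1 F (p0,p1,p2,p3)) < eps).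
  { apply C1'. unfold nearp; simpl. repeat split; rewrite ?Rminus_diag, ?Rabs_R0; lra. }
  assert (K2 : Rabs (dR 2 F (q0,q1,c2,p3) - dR 2 F (p0,p1,p2,p3)) < eps).
  { apply C2. unfold nearp; simpl. repeat split; rewrite ?Rminus_diag, ?Rabs_R0; lra. }
  assert (K3 : Rabs (dR 3 F (q0,q1,q2,c3) - dR 3 F (p0,p1,p2,p3)) < eps).
  { apply C3. unfold nearp; simpl. repeat split; rewrite ?Rminus_diag, ?Rabs_R0; lra. }
  unfold dR in K0, K1, K2, K3; simpl in K0, K1, K2, K3.
  unfold dR; simpl.
  set (e0 := Derive (fun t => F (t, p1, p2, p3)) c0 - Derive (fun t => F (t, p1, p2, p3)) p0) in *.
  set (e1 := Derive (fun t => F (q0, t, p2, p3)) c1 - Derive (fun t => F (p0, t, p2, p3)) p1) in *.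
  set (e2 := Derive (fun t => F (q0, q1, t, p3)) c2 - Derive (fun t => F (p0, p1, t, p3)) p2) in *.
  set (e3 := Derive (fun t => F (q0, q1, q2, t)) c3 - Derive (fun t => F (p0, p1, p2, t)) p3) in *.
  replace (F (q0, q1, q2, q3) - F (p0, p1, p2, p3) -
    ((q0 - p0) * Derive (fun t => F (t, p1, p2, p3)) p0 +
     (q1 - p1) * Derive (fun t => F (p0, t, p2, p3)) p1 +
     (q2 - p2) * Derive (fun t => F (p0, p1, t, p3)) p2 +
     (q3 - p3) * Derive (fun t => F (p0, p1, p2, t)) p3))
   with (e0 * (q0 - p0) + e1 * (q1 - p1) + e2 * (q2 - p2) + e3 * (q3 - p3)).
  2:{ unfold e0, e1, e2, e3. lra. }
  eapply Rle_trans. apply Rabs_triang. eapply Rle_trans. apply Rplus_le_compat_r. apply Rabs_triang.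
  eapply Rle_trans. apply Rplus_le_compat_r. apply Rplus_le_compat_r. apply Rabs_triang.
  rewrite !Rabs_mult.
  assert (A0 := Rabs_pos (q0 - p0)). assert (A1 := Rabs_pos (q1 - p1)).
  assert (A2 := Rabs_pos (q2 - p2)). assert (A3 := Rabs_pos (q3 - p3)).
  assert (B0 : Rabs e0 * Rabs (q0 - p0) <= eps * Rabs (q0 - p0)) by (apply Rmult_le_compat_r; lra).
  assert (B1 : Rabs e1 * Rabs (q1 - p1) <= eps * Rabs (q1 - p1)) by (apply Rmult_le_compat_r; lra).
  assert (B2 : Rabs e2 * Rabs (q2 - p2) <= eps * Rabs (q2 - p2)) by (apply Rmult_le_compat_r; lra).
  assert (B3 : Rabs e3 * Rabs (q3 - p3) <= eps * Rabs (q3 - p3)) by (apply Rmult_le_compat_r; lra).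
  lra.
Qed.
Lemma cont_of_diff (F : pt -> R) (p : pt) : DR F ->
  (forall k, (k < 4)%nat -> continuous (dR k F) p) -> continuous F p.
Proof.
  intros HD Hc. apply eps_cont. intros eps He.
  destruct (diffpt F p HD Hc 1 ltac:(lra)) as [d [Hd H]].
  set (M := Rabs (dR 0 F p) + Rabs (dR 1 F p) + Rabs (dR 2 F p) + Rabs (dR 3 F p) + 1).
  assert (HM : 1 <= M).
  { unfold M. pose proof (Rabs_pos (dR 0 F p)). pose proof (Rabs_pos (dR 1 F p)).
    pose proof (Rabs_pos (dR 2 F p)). pose proof (Rabs_pos (dR 3 F p)). lra. }
  exists (Rmin d (eps / (8 * M))). split.
  { apply Rmin_pos. lra. apply Rdiv_lt_0_compat; lra. }
  intros q Hq.
  assert (Hq1 : nearp d p q).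
  { destruct Hq as [Q0 [Q1 [Q2 Q3]]]. pose proof (Rmin_l d (eps / (8 * M))).
    unfold nearp; repeat split; lra. }
  specialize (H q Hq1).
  destruct Hq as [Q0 [Q1 [Q2 Q3]]]. pose proof (Rmin_r d (eps / (8 * M))) as Hr.
  set (r := Rmin d (eps / (8 * M))) in *.
  assert (Hr2 : r * (8 * M) <= eps).
  { apply Rle_trans with (eps / (8 * M) * (8 * M)).
    apply Rmult_le_compat_r; [lra | exact Hr]. right; field; lra. }
  set (x0 := coord q 0 - coord p 0) in *. set (x1 := coord q 1 - coord p 1) in *.
  set (x2 := coord q 2 - coord p 2) in *. set (x3 := coord q 3 - coord p 3) in *.
  assert (T: Rabs (x0 * dR 0 F p + x1 * dR 1 F p + x2 * dR 2 F p + x3 * dR 3 F p) <= r * M).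
  { eapply Rle_trans. apply Rabs_triang. eapply Rle_trans. apply Rplus_le_compat_r. apply Rabs_triang.
    eapply Rle_trans. apply Rplus_le_compat_r. apply Rplus_le_compat_r. apply Rabs_triang.
    rewrite !Rabs_mult. unfold M.
    pose proof (Rabs_pos (dR 0 F p)). pose proof (Rabs_pos (dR 1 F p)).
    pose proof (Rabs_pos (dR 2 F p)). pose proof (Rabs_pos (dR 3 F p)).
    pose proof (Rabs_pos x0). pose proof (Rabs_pos x1). pose proof (Rabs_pos x2). pose proof (Rabs_pos x3).
    nra. }
  assert (HMr : 0 <= r * M) by (pose proof (Rabs_pos x0); nra).
  pose proof (Rabs_pos x0). pose proof (Rabs_pos x1). pose proof (Rabs_pos x2). pose proof (Rabs_pos x3).
  set (L := x0 * dR 0 F p + x1 * dR 1 F p + x2 * dR 2 F p + x3 * dR 3 F p) in *.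
  replace (F q - F p) with ((F q - F p - L) + L) by ring.
  eapply Rle_lt_trans. apply Rabs_triang.
  assert (Rabs (F q - F p - L) <= 4 * r) by lra.
  nra.
Qed.

Definition Qf (A1 B1 A2 B2 : R) (q : pt) : R :=
  A1 * coord q 0 ^ 2 + B1 * coord q 1 ^ 2 + A2 * coord q 2 ^ 2 + B2 * coord q 3 ^ 2.

Lemma abs4 (a0 a1 a2 a3 e0 e1 e2 e3 : R) :
  Rabs (a0 * e0 + a1 * e1 + a2 * e2 + a3 * e3) <=
  Rabs a0 * Rabs e0 + Rabs a1 * Rabs e1 + Rabs a2 * Rabs e2 + Rabs a3 * Rabs e3.
Proof.
  eapply Rle_trans. apply Rabs_triang. eapply Rle_trans. apply Rplus_le_compat_r. apply Rabs_triang.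
  eapply Rle_trans. apply Rplus_le_compat_r. apply Rplus_le_compat_r. apply Rabs_triang.
  rewrite !Rabs_mult. lra.
Qed.

Lemma sqrt_bounds (a : R) : 0 <= a -> 1 <= sqrt (1 + a) <= 1 + a.
Proof.
  intros Ha. split.
  - assert (H : sqrt 1 <= sqrt (1 + a)) by (apply sqrt_le_1_alt; lra).
    rewrite sqrt_1 in H. exact H.
  - assert (H : sqrt (1 + a) <= sqrt ((1 + a) ^ 2)) by (apply sqrt_le_1_alt; nra).
    rewrite sqrt_pow2 in H by lra. exact H.
Qed.

Lemma tangentL (A1 B1 A2 B2 : R) (F : pt -> R) (p : pt) (v0 v1 v2 v3 : R) :
  0 < A1 -> 0 < B1 -> 0 < A2 -> 0 < B2 -> DR F ->
  (forall k, (k < 4)%nat -> continuous (dR k F) p) ->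
  (forall q, Qf A1 B1 A2 B2 q = 1 -> F q = 0) -> Qf A1 B1 A2 B2 p = 1 ->
  A1 * coord p 0 * v0 + B1 * coord p 1 * v1 + A2 * coord p 2 * v2 + B2 * coord p 3 * v3 = 0 ->
  v0 * dR 0 F p + v1 * dR 1 F p + v2 * dR 2 F p + v3 * dR 3 F p = 0.
Proof.
  intros HA1 HB1 HA2 HB2 HD Hc HM Hp Htan.
  set (S := v0 * dR 0 F p + v1 * dR 1 F p + v2 * dR 2 F p + v3 * dR 3 F p).
  destruct (Req_dec S 0) as [HS | HS]; [exact HS | exfalso].
  assert (HSp : 0 < Rabs S) by (apply Rabs_pos_lt; exact HS).
  set (d0 := dR 0 F p) in *. set (d1 := dR 1 F p) in *.
  set (d2 := dR 2 F p) in *. set (d3 := dR 3 F p) in *.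
  set (Qv := A1 * v0 ^ 2 + B1 * v1 ^ 2 + A2 * v2 ^ 2 + B2 * v3 ^ 2).
  assert (HQv : 0 <= Qv) by (unfold Qv; nra).
  destruct p as [[[p0 p1] p2] p3]. simpl in Htan.
  set (P := Rabs p0 + Rabs v0 + (Rabs p1 + Rabs v1) + (Rabs p2 + Rabs v2) + (Rabs p3 + Rabs v3)).
  set (Dm := Rabs d0 + Rabs d1 + Rabs d2 + Rabs d3).
  set (V := Rabs v0 + Rabs v1 + Rabs v2 + Rabs v3).
  assert (HP : 0 <= P) by (unfold P; pose proof (Rabs_pos p0); pose proof (Rabs_pos p1);
    pose proof (Rabs_pos p2); pose proof (Rabs_pos p3); pose proof (Rabs_pos v0);
    pose proof (Rabs_pos v1); pose proof (Rabs_pos v2); pose proof (Rabs_pos v3); lra).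
  assert (HDm : 0 <= Dm) by (unfold Dm; pose proof (Rabs_pos d0); pose proof (Rabs_pos d1);
    pose proof (Rabs_pos d2); pose proof (Rabs_pos d3); lra).
  assert (HV : 0 <= V) by (unfold V; pose proof (Rabs_pos v0);
    pose proof (Rabs_pos v1); pose proof (Rabs_pos v2); pose proof (Rabs_pos v3); lra).
  set (N := Qv * P * Dm).
  assert (HN : 0 <= N) by (unfold N; apply Rmult_le_pos; [apply Rmult_le_pos|]; lra).
  set (M := V + Qv * P + 1).
  assert (HMp : 1 <= M) by (unfold M; nra).
  destruct (diffpt F (p0, p1, p2, p3) HD Hc (Rabs S / (2 * M))) as [d [Hd Hdiff]].
  { apply Rdiv_lt_0_compat; lra. }
  set (t := Rmin 1 (Rmin (d / (2 * M)) (Rabs S / (4 * (N + 1))))).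
  assert (Ht1 : t <= 1) by apply Rmin_l.
  assert (Ht2 : t <= d / (2 * M)) by (eapply Rle_trans; [apply Rmin_r| apply Rmin_l]).
  assert (Ht3 : t <= Rabs S / (4 * (N + 1))) by (eapply Rle_trans; [apply Rmin_r| apply Rmin_r]).
  assert (Ht0 : 0 < t).
  { unfold t. apply Rmin_pos. lra. apply Rmin_pos; apply Rdiv_lt_0_compat; lra. }
  assert (Ht2' : t * (2 * M) <= d).
  { apply Rle_trans with (d / (2 * M) * (2 * M)). apply Rmult_le_compat_r; lra. right; field; lra. }
  assert (Ht3' : t * (4 * (N + 1)) <= Rabs S).
  { apply Rle_trans with (Rabs S / (4 * (N + 1)) * (4 * (N + 1))). apply Rmult_le_compat_r; lra.
    right; field; lra. }
  set (a := t ^ 2 * Qv).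
  assert (Ha : 0 <= a) by (unfold a; nra).
  assert (Hw := sqrt_bounds a Ha).
  set (w := sqrt (1 + a)) in *.
  assert (Hw2 : w * w = 1 + a) by (unfold w; apply sqrt_sqrt; lra).
  set (s := / w).
  assert (Hs0 : 0 < s) by (unfold s; apply Rinv_0_lt_compat; lra).
  assert (Hs1 : s <= 1) by (unfold s; rewrite <- Rinv_1; apply Rinv_le_contravar; lra).
  assert (Hsw : s * w = 1) by (unfold s; field; lra).
  assert (Hs2 : 1 - s <= a) by nra.
  set (q := (s * (p0 + t * v0), s * (p1 + t * v1), s * (p2 + t * v2), s * (p3 + t * v3))).
  assert (Hq : Qf A1 B1 A2 B2 q = 1).
  { unfold Qf, q in *; cbn [coord fst snd] in *. unfold a, Qv in Hw2.
    replace (A1 * (s * (p0 + t * v0)) ^ 2 + B1 * (s * (p1 + t * v1)) ^ 2 +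
       A2 * (s * (p2 + t * v2)) ^ 2 + B2 * (s * (p3 + t * v3)) ^ 2)
    with (s * s * ((A1 * p0 ^ 2 + B1 * p1 ^ 2 + A2 * p2 ^ 2 + B2 * p3 ^ 2)
          + 2 * t * (A1 * p0 * v0 + B1 * p1 * v1 + A2 * p2 * v2 + B2 * p3 * v3)
          + t ^ 2 * (A1 * v0 ^ 2 + B1 * v1 ^ 2 + A2 * v2 ^ 2 + B2 * v3 ^ 2))) by ring.
    rewrite Hp, Htan. nra. }
  assert (Hcb : forall pi vi, Rabs (s * (pi + t * vi) - pi) <= t * Rabs vi + t * (t * Qv) * (Rabs pi + Rabs vi)).
  { intros pi vi.
    replace (s * (pi + t * vi) - pi) with (t * vi + (s - 1) * (pi + t * vi)) by ring.
    eapply Rle_trans. apply Rabs_triang. rewrite !Rabs_mult.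
    rewrite (Rabs_pos_eq t) by lra. rewrite Rabs_minus_sym, (Rabs_pos_eq (1 - s)) by lra.
    assert (Rabs (pi + t * vi) <= Rabs pi + Rabs vi).
    { eapply Rle_trans. apply Rabs_triang. rewrite Rabs_mult, (Rabs_pos_eq t) by lra.
      pose proof (Rabs_pos vi). nra. }
    pose proof (Rabs_pos (pi + t * vi)). pose proof (Rabs_pos vi). pose proof (Rabs_pos pi).
    unfold a in Hs2. nra. }
  assert (B0 := Hcb p0 v0). assert (B1' := Hcb p1 v1). assert (B2' := Hcb p2 v2). assert (B3 := Hcb p3 v3).
  pose proof (Rabs_pos p0). pose proof (Rabs_pos p1). pose proof (Rabs_pos p2). pose proof (Rabs_pos p3).
  pose proof (Rabs_pos v0). pose proof (Rabs_pos v1). pose proof (Rabs_pos v2). pose proof (Rabs_pos v3).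
  assert (Hsum : Rabs (s * (p0 + t * v0) - p0) + Rabs (s * (p1 + t * v1) - p1)
     + Rabs (s * (p2 + t * v2) - p2) + Rabs (s * (p3 + t * v3) - p3) <= t * M).
  { assert (E1 : t * (t * Qv) * P <= t * Qv * P).
    { apply Rmult_le_compat_r; [exact HP|]. assert (0 <= t * Qv) by nra. nra. }
    assert (E2 : t * Qv * P <= t * (Qv * P)) by (right; ring).
    unfold M, V. unfold P in *. lra. }
  assert (Hnear : nearp d (p0, p1, p2, p3) q).
  { unfold nearp, q; simpl.
    pose proof (Rabs_pos (s * (p0 + t * v0) - p0)). pose proof (Rabs_pos (s * (p1 + t * v1) - p1)).
    pose proof (Rabs_pos (s * (p2 + t * v2) - p2)). pose proof (Rabs_pos (s * (p3 + t * v3) - p3)).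
    repeat split; nra. }
  specialize (Hdiff q Hnear).
  rewrite (HM _ Hq) in Hdiff. rewrite (HM (p0, p1, p2, p3) Hp) in Hdiff.
  unfold q in Hdiff; cbn [coord fst snd] in Hdiff.
  fold d0 d1 d2 d3 in Hdiff.
  set (R0 := (s - 1) * ((p0 + t * v0) * d0 + (p1 + t * v1) * d1 + (p2 + t * v2) * d2 + (p3 + t * v3) * d3)).
  assert (Hid : 0 - 0 - ((s * (p0 + t * v0) - p0) * d0 + (s * (p1 + t * v1) - p1) * d1 +
     (s * (p2 + t * v2) - p2) * d2 + (s * (p3 + t * v3) - p3) * d3) = - (t * S + R0)).
  { unfold R0, S. fold d0 d1 d2 d3. ring. }
  rewrite Hid, Rabs_Ropp in Hdiff.
  assert (HR0 : Rabs R0 <= t * t * N).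
  { unfold R0. rewrite Rabs_mult. rewrite Rabs_minus_sym, (Rabs_pos_eq (1 - s)) by lra.
    assert (Habs := abs4 (p0 + t * v0) (p1 + t * v1) (p2 + t * v2) (p3 + t * v3) d0 d1 d2 d3).
    assert (Hb : forall pi vi, Rabs (pi + t * vi) <= Rabs pi + Rabs vi).
    { intros pi vi. eapply Rle_trans. apply Rabs_triang. rewrite Rabs_mult, (Rabs_pos_eq t) by lra.
      pose proof (Rabs_pos vi). nra. }
    assert (Hsum2 : Rabs (p0 + t * v0) * Rabs d0 + Rabs (p1 + t * v1) * Rabs d1 +
       Rabs (p2 + t * v2) * Rabs d2 + Rabs (p3 + t * v3) * Rabs d3 <= P * Dm).
    { pose proof (Hb p0 v0). pose proof (Hb p1 v1). pose proof (Hb p2 v2). pose proof (Hb p3 v3).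
      pose proof (Rabs_pos d0). pose proof (Rabs_pos d1). pose proof (Rabs_pos d2). pose proof (Rabs_pos d3).
      unfold P, Dm. nra. }
    set (X := Rabs ((p0 + t * v0) * d0 + (p1 + t * v1) * d1 + (p2 + t * v2) * d2 + (p3 + t * v3) * d3)) in *.
    assert (0 <= X) by apply Rabs_pos.
    unfold N, a in *. nra. }
  assert (Hmain : t * Rabs S <= Rabs (t * S + R0) + Rabs R0).
  { replace (t * Rabs S) with (Rabs (t * S)) by (rewrite Rabs_mult, Rabs_pos_eq; lra).
    replace (t * S) with ((t * S + R0) + - R0) at 1 by ring.
    eapply Rle_trans. apply Rabs_triang. rewrite Rabs_Ropp. lra. }
  assert (Heps : Rabs S / (2 * M) * (t * M) = t * Rabs S / 2) by (field; lra).
  assert (Hle : Rabs (t * S + R0) <= t * Rabs S / 2).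
  { rewrite <- Heps. eapply Rle_trans. exact Hdiff. apply Rmult_le_compat_l.
    apply Rlt_le, Rdiv_lt_0_compat; lra. exact Hsum. }
  assert (Habs : Rabs S <= 2 * t * N) by nra.
  nra.
Qed.

Open Scope C_scope.

Definition fre (f : CFun) : pt -> R := fun q => Re (f q).
Definition fim (f : CFun) : pt -> R := fun q => Im (f q).

Definition Exd (f : CFun) (k : nat) (q : pt) : Prop :=
  ex_derive (fun t => Re (f (upd q k t))) (coord q k) /\
  ex_derive (fun t => Im (f (upd q k t))) (coord q k).
Definition DRC (f : CFun) : Prop := forall k q, (k < 4)%nat -> Exd f k q.
Definition G (f : CFun) (p : pt) : Prop :=
  DRC f /\ forall k, (k < 4)%nat -> continuous (dR k (fre f)) p /\ continuous (dR k (fim f)) p.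

Lemma upd_coord (q : pt) (k : nat) : upd q k (coord q k) = q.
Proof.
  destruct q as [[[q0 q1] q2] q3]. destruct k as [|[|[|k]]]; reflexivity.
Qed.
Lemma upd_upd (q : pt) (k : nat) (s t : R) : upd (upd q k s) k t = upd q k t.
Proof.
  destruct q as [[[q0 q1] q2] q3]. destruct k as [|[|[|k]]]; reflexivity.
Qed.
Lemma coord_upd (q : pt) (k : nat) (t : R) : coord (upd q k t) k = t.
Proof.
  destruct q as [[[q0 q1] q2] q3]. destruct k as [|[|[|k]]]; reflexivity.
Qed.

Lemma pd_eq (k : nat) (f : CFun) (q : pt) : pd k f q = (dR k (fre f) q, dR k (fim f) q).
Proof. reflexivity. Qed.

Lemma C1_G (f : CFun) (p : pt) : Defs.C1 f -> G f p.
Proof.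
  intros H. split.
  - intros k q Hk. destruct (H k q Hk) as [H1 [H2 _]]. split; assumption.
  - intros k Hk. destruct (H k p Hk) as [_ [_ H3]]. split.
    + apply (continuous_comp (pd k f) fst p H3). unfold pd. apply continuous_fst.
    + apply (continuous_comp (pd k f) snd p H3). unfold pd. apply continuous_snd.
Qed.

Lemma G_DR_re (f : CFun) (p : pt) : G f p -> DR (fre f).
Proof. intros [H _] k q Hk. exact (proj1 (H k q Hk)). Qed.
Lemma G_DR_im (f : CFun) (p : pt) : G f p -> DR (fim f).
Proof. intros [H _] k q Hk. exact (proj2 (H k q Hk)). Qed.

Lemma G_cont_re (f : CFun) (p : pt) : G f p -> continuous (fre f) p.
Proof.
  intros HG. apply cont_of_diff. eapply G_DR_re; eauto.
  intros k Hk. exact (proj1 (proj2 HG k Hk)).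
Qed.
Lemma G_cont_im (f : CFun) (p : pt) : G f p -> continuous (fim f) p.
Proof.
  intros HG. apply cont_of_diff. eapply G_DR_im; eauto.
  intros k Hk. exact (proj2 (proj2 HG k Hk)).
Qed.

Lemma cRmult (f g : pt -> R) (p : pt) : continuous f p -> continuous g p ->
  continuous (fun y => (f y * g y)%R) p.
Proof. intros; apply (continuous_mult (K := R_AbsRing)); assumption. Qed.
Lemma cRplus (f g : pt -> R) (p : pt) : continuous f p -> continuous g p ->
  continuous (fun y => (f y + g y)%R) p.
Proof. intros; apply (continuous_plus (V := R_NormedModule)); assumption. Qed.
Lemma cRopp (f : pt -> R) (p : pt) : continuous f p -> continuous (fun y => (- f y)%R) p.
Proof. intros; apply (continuous_opp (V := R_NormedModule)); assumption. Qed.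
Lemma cRminus (f g : pt -> R) (p : pt) : continuous f p -> continuous g p ->
  continuous (fun y => (f y - g y)%R) p.
Proof. intros. apply cRplus; [|apply cRopp]; assumption. Qed.
Lemma cRconst (c : R) (p : pt) : continuous (fun _ => c) p.
Proof. apply continuous_const. Qed.

Lemma Ceq (a b : C) : Re a = Re b -> Im a = Im b -> a = b.
Proof. destruct a, b; simpl; intros; subst; reflexivity. Qed.

Lemma pd_plus (k : nat) (f g : CFun) (p : pt) : Exd f k p -> Exd g k p ->
  pd k (fun q => f q + g q) p = pd k f p + pd k g p.
Proof.
  intros [Hf1 Hf2] [Hg1 Hg2]. unfold pd. apply Ceq; simpl.
  - exact (Derive_plus _ _ _ Hf1 Hg1).
  - exact (Derive_plus _ _ _ Hf2 Hg2).
Qed.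

Lemma pd_opp (k : nat) (f : CFun) (p : pt) :
  pd k (fun q => - f q) p = - pd k f p.
Proof.
  unfold pd. apply Ceq; simpl.
  - exact (Derive_opp (fun t => Re (f (upd p k t))) _).
  - exact (Derive_opp (fun t => Im (f (upd p k t))) _).
Qed.

Lemma pd_mult (k : nat) (f g : CFun) (p : pt) : Exd f k p -> Exd g k p ->
  pd k (fun q => f q * g q) p = pd k f p * g p + f p * pd k g p.
Proof.
  intros [Hf1 Hf2] [Hg1 Hg2]. unfold pd. apply Ceq; simpl.
  - change (Derive (fun t => (Re (f (upd p k t)) * Re (g (upd p k t)) -
          Im (f (upd p k t)) * Im (g (upd p k t)))%R) (coord p k) =
      (Derive (fun t => Re (f (upd p k t))) (coord p k) * Re (g p) -
       Derive (fun t => Im (f (upd p k t))) (coord p k) * Im (g p) +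
       (Re (f p) * Derive (fun t => Re (g (upd p k t))) (coord p k) -
        Im (f p) * Derive (fun t => Im (g (upd p k t))) (coord p k)))%R).
    rewrite Derive_minus by (apply ex_derive_mult; assumption).
    rewrite !Derive_mult by assumption.
    rewrite upd_coord. ring.
  - change (Derive (fun t => (Re (f (upd p k t)) * Im (g (upd p k t)) +
          Im (f (upd p k t)) * Re (g (upd p k t)))%R) (coord p k) =
      (Derive (fun t => Re (f (upd p k t))) (coord p k) * Im (g p) +
       Derive (fun t => Im (f (upd p k t))) (coord p k) * Re (g p) +
       (Re (f p) * Derive (fun t => Im (g (upd p k t))) (coord p k) +
        Im (f p) * Derive (fun t => Re (g (upd p k t))) (coord p k)))%R).
    rewrite Derive_plus by (apply ex_derive_mult; assumption).
    rewrite !Derive_mult by assumption.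
    rewrite upd_coord. ring.
Qed.

Lemma pd_const (k : nat) (c : C) (p : pt) : pd k (fun _ => c) p = 0.
Proof. unfold pd. rewrite !Derive_const. reflexivity. Qed.

Lemma pd_conj (k : nat) (f : CFun) (p : pt) :
  pd k (fun q => Cconj (f q)) p = Cconj (pd k f p).
Proof.
  unfold pd. apply Ceq; simpl. reflexivity.
  exact (Derive_opp (fun t => Im (f (upd p k t))) _).
Qed.

Lemma Exd_plus k f g q : Exd f k q -> Exd g k q -> Exd (fun q => f q + g q) k q.
Proof. intros [H1 H2] [H3 H4]. split. exact (ex_derive_plus _ _ _ H1 H3). exact (ex_derive_plus _ _ _ H2 H4). Qed.
Lemma Exd_opp k f q : Exd f k q -> Exd (fun q => - f q) k q.
Proof. intros [H1 H2]. split. exact (ex_derive_opp _ _ H1). exact (ex_derive_opp _ _ H2). Qed.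
Lemma Exd_mult k f g q : Exd f k q -> Exd g k q -> Exd (fun q => f q * g q) k q.
Proof.
  intros [H1 H2] [H3 H4]. split.
  - exact (ex_derive_minus _ _ _ (ex_derive_mult _ _ _ H1 H3) (ex_derive_mult _ _ _ H2 H4)).
  - exact (ex_derive_plus _ _ _ (ex_derive_mult _ _ _ H1 H4) (ex_derive_mult _ _ _ H2 H3)).
Qed.
Lemma Exd_const k (c : C) q : Exd (fun _ => c) k q.
Proof. split; apply ex_derive_const. Qed.
Lemma Exd_conj k f q : Exd f k q -> Exd (fun q => Cconj (f q)) k q.
Proof. intros [H1 H2]. split. exact H1. exact (ex_derive_opp _ _ H2). Qed.

Lemma G_plus f g p : G f p -> G g p -> G (fun q => f q + g q) p.
Proof.
  intros [Df Cf] [Dg Cg]. split.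
  - intros k q Hk. apply Exd_plus; auto.
  - intros k Hk. destruct (Cf k Hk) as [C1' C2']. destruct (Cg k Hk) as [C3 C4].
    split.
    + eapply continuous_ext. intros q. symmetry.
      exact (f_equal fst (pd_plus k f g q (Df k q Hk) (Dg k q Hk))).
      simpl. apply cRplus; assumption.
    + eapply continuous_ext. intros q. symmetry.
      exact (f_equal snd (pd_plus k f g q (Df k q Hk) (Dg k q Hk))).
      simpl. apply cRplus; assumption.
Qed.

Lemma G_opp f p : G f p -> G (fun q => - f q) p.
Proof.
  intros [Df Cf]. split.
  - intros k q Hk. apply Exd_opp; auto.
  - intros k Hk. destruct (Cf k Hk) as [C1' C2']. split.
    + eapply continuous_ext. intros q. symmetry. exact (f_equal fst (pd_opp k f q)).
      simpl. apply cRopp; assumption.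
    + eapply continuous_ext. intros q. symmetry. exact (f_equal snd (pd_opp k f q)).
      simpl. apply cRopp; assumption.
Qed.

Lemma G_conj f p : G f p -> G (fun q => Cconj (f q)) p.
Proof.
  intros [Df Cf]. split.
  - intros k q Hk. apply Exd_conj; auto.
  - intros k Hk. destruct (Cf k Hk) as [C1' C2']. split.
    + eapply continuous_ext. intros q. symmetry. exact (f_equal fst (pd_conj k f q)).
      simpl. assumption.
    + eapply continuous_ext. intros q. symmetry. exact (f_equal snd (pd_conj k f q)).
      simpl. apply cRopp; assumption.
Qed.

Lemma G_const (c : C) p : G (fun _ => c) p.
Proof.
  split.
  - intros k q Hk. apply Exd_const.
  - intros k Hk. split.
    + eapply continuous_ext. intros q. symmetry. exact (f_equal fst (pd_const k c q)).
      apply cRconst.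
    + eapply continuous_ext. intros q. symmetry. exact (f_equal snd (pd_const k c q)).
      apply cRconst.
Qed.

Lemma G_mult f g p : G f p -> G g p -> G (fun q => f q * g q) p.
Proof.
  intros Gf Gg. assert (Ff := G_cont_re f p Gf). assert (Fi := G_cont_im f p Gf).
  assert (Gr := G_cont_re g p Gg). assert (Gi := G_cont_im g p Gg).
  destruct Gf as [Df Cf]. destruct Gg as [Dg Cg]. split.
  - intros k q Hk. apply Exd_mult; auto.
  - intros k Hk. destruct (Cf k Hk) as [C1' C2']. destruct (Cg k Hk) as [C3 C4].
    split.
    + eapply continuous_ext. intros q. symmetry.
      exact (f_equal fst (pd_mult k f g q (Df k q Hk) (Dg k q Hk))).
      simpl. unfold fre, fim in *.
      apply cRplus; apply cRminus; apply cRmult; assumption.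
    + eapply continuous_ext. intros q. symmetry.
      exact (f_equal snd (pd_mult k f g q (Df k q Hk) (Dg k q Hk))).
      simpl. unfold fre, fim in *.
      apply cRplus; apply cRplus; apply cRmult; assumption.
Qed.

Definition zf1 : CFun := fun q => (coord q 0, coord q 1).
Definition zf2 : CFun := fun q => (coord q 2, coord q 3).

Lemma Dcoord (j k : nat) (q : pt) : (j < 4)%nat -> (k < 4)%nat ->
  ex_derive (fun t => coord (upd q k t) j) (coord q k) /\
  Derive (fun t => coord (upd q k t) j) (coord q k) = if Nat.eqb j k then 1%R else 0%R.
Proof.
  intros Hj Hk. destruct q as [[[q0 q1] q2] q3].
  destruct k as [|[|[|[|k]]]]; try lia; destruct j as [|[|[|[|j]]]]; try lia; cbn [upd coord fst snd Nat.eqb];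
  lazymatch goal with
  | |- ex_derive (fun t => t) _ /\ _ => split; [apply ex_derive_id | apply Derive_id]
  | _ => split; [apply ex_derive_const | apply Derive_const] end.
Qed.

Lemma Exd_zf1 k q : (k < 4)%nat -> Exd zf1 k q.
Proof. intros Hk. split; [exact (proj1 (Dcoord 0 k q ltac:(lia) Hk)) | exact (proj1 (Dcoord 1 k q ltac:(lia) Hk))]. Qed.
Lemma Exd_zf2 k q : (k < 4)%nat -> Exd zf2 k q.
Proof. intros Hk. split; [exact (proj1 (Dcoord 2 k q ltac:(lia) Hk)) | exact (proj1 (Dcoord 3 k q ltac:(lia) Hk))]. Qed.

Lemma pd_zf1 k q : (k < 4)%nat ->
  pd k zf1 q = ((if Nat.eqb 0 k then 1 else 0), (if Nat.eqb 1 k then 1 else 0))%R.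
Proof.
  intros Hk. unfold pd. apply Ceq; simpl.
  exact (proj2 (Dcoord 0 k q ltac:(lia) Hk)). exact (proj2 (Dcoord 1 k q ltac:(lia) Hk)).
Qed.
Lemma pd_zf2 k q : (k < 4)%nat ->
  pd k zf2 q = ((if Nat.eqb 2 k then 1 else 0), (if Nat.eqb 3 k then 1 else 0))%R.
Proof.
  intros Hk. unfold pd. apply Ceq; simpl.
  exact (proj2 (Dcoord 2 k q ltac:(lia) Hk)). exact (proj2 (Dcoord 3 k q ltac:(lia) Hk)).
Qed.

Lemma G_const_pd (f : CFun) (p : pt) :
  DRC f -> (forall k, (k < 4)%nat -> exists c, forall q, pd k f q = c) -> G f p.
Proof.
  intros HD Hc. split. exact HD.
  intros k Hk. destruct (Hc k Hk) as [c Hq]. split.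
  - eapply continuous_ext. intros q. symmetry. exact (f_equal fst (Hq q)). apply cRconst.
  - eapply continuous_ext. intros q. symmetry. exact (f_equal snd (Hq q)). apply cRconst.
Qed.

Lemma DRC_zf1 : DRC zf1. Proof. intros k q Hk. apply Exd_zf1; auto. Qed.
Lemma DRC_zf2 : DRC zf2. Proof. intros k q Hk. apply Exd_zf2; auto. Qed.

Lemma G_zf1 p : G zf1 p.
Proof. apply G_const_pd. apply DRC_zf1. intros k Hk. eexists. intros q. apply pd_zf1; auto. Qed.
Lemma G_zf2 p : G zf2 p.
Proof. apply G_const_pd. apply DRC_zf2. intros k Hk. eexists. intros q. apply pd_zf2; auto. Qed.

Lemma app_plus X f g p : DRC f -> DRC g -> app X (fun q => f q + g q) p = app X f p + app X g p.
Proof.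
  intros Hf Hg. unfold app, dz1, dz2, dzb1, dzb2.
  rewrite !pd_plus by (first [apply Hf | apply Hg]; lia). ring.
Qed.
Lemma app_opp X f p : app X (fun q => - f q) p = - app X f p.
Proof. unfold app, dz1, dz2, dzb1, dzb2. rewrite !pd_opp. ring. Qed.
Lemma app_mult X f g p : DRC f -> DRC g ->
  app X (fun q => f q * g q) p = app X f p * g p + f p * app X g p.
Proof.
  intros Hf Hg. unfold app, dz1, dz2, dzb1, dzb2.
  rewrite !pd_mult by (first [apply Hf | apply Hg]; lia). ring.
Qed.
Lemma app_const X (c : C) p : app X (fun _ => c) p = 0.
Proof. unfold app, dz1, dz2, dzb1, dzb2. rewrite !pd_const. ring. Qed.
Lemma app_zf1 X p : app X zf1 p = vz1 X p.
Proof.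
  unfold app, dz1, dz2, dzb1, dzb2. rewrite !pd_zf1 by lia. simpl.
  apply Ceq; unfold Re, Im; simpl; field.
Qed.
Lemma app_zf2 X p : app X zf2 p = vz2 X p.
Proof.
  unfold app, dz1, dz2, dzb1, dzb2. rewrite !pd_zf2 by lia. simpl.
  apply Ceq; unfold Re, Im; simpl; field.
Qed.
Lemma app_czf1 X p : app X (fun q => Cconj (zf1 q)) p = vzb1 X p.
Proof.
  unfold app, dz1, dz2, dzb1, dzb2. rewrite !pd_conj, !pd_zf1 by lia. simpl.
  apply Ceq; unfold Re, Im; simpl; field.
Qed.
Lemma app_czf2 X p : app X (fun q => Cconj (zf2 q)) p = vzb2 X p.
Proof.
  unfold app, dz1, dz2, dzb1, dzb2. rewrite !pd_conj, !pd_zf2 by lia. simpl.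
  apply Ceq; unfold Re, Im; simpl; field.
Qed.

Open Scope C_scope.

Lemma DRC_plus f g : DRC f -> DRC g -> DRC (fun q => f q + g q).
Proof. intros Hf Hg k q Hk. apply Exd_plus; auto. Qed.
Lemma DRC_mult f g : DRC f -> DRC g -> DRC (fun q => f q * g q).
Proof. intros Hf Hg k q Hk. apply Exd_mult; auto. Qed.
Lemma DRC_const (c : C) : DRC (fun _ => c).
Proof. intros k q Hk. apply Exd_const. Qed.
Lemma DRC_conj f : DRC f -> DRC (fun q => Cconj (f q)).
Proof. intros Hf k q Hk. apply Exd_conj; auto. Qed.
Lemma DRC_opp f : DRC f -> DRC (fun q => - f q).
Proof. intros Hf k q Hk. apply Exd_opp; auto. Qed.
Lemma G_DRC f p : G f p -> DRC f.
Proof. intros [H _]; exact H. Qed.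

Definition Lin (c1 c2 c3 c4 : C) : CFun := fun q =>
  c1 * zf1 q + c2 * Cconj (zf1 q) + c3 * zf2 q + c4 * Cconj (zf2 q).

Ltac drc := lazymatch goal with
  | |- DRC (fun _ => ?c) => apply (DRC_const c)
  | |- DRC (fun q => _ + _) => apply DRC_plus; drc
  | |- DRC (fun q => _ * _) => apply DRC_mult; drc
  | |- DRC (fun q => - _) => apply DRC_opp; drc
  | |- DRC (fun q => Cconj _) => apply DRC_conj; drc
  | |- DRC zf1 => apply DRC_zf1
  | |- DRC zf2 => apply DRC_zf2
  | |- DRC (fun q => zf1 q) => apply DRC_zf1
  | |- DRC (fun q => zf2 q) => apply DRC_zf2
  | _ => idtac
  end.

Ltac gtac := lazymatch goal with
  | |- G (fun _ => ?c) _ => apply (G_const c)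
  | |- G (fun q => _ + _) _ => apply G_plus; gtac
  | |- G (fun q => _ * _) _ => apply G_mult; gtac
  | |- G (fun q => - _) _ => apply G_opp; gtac
  | |- G (fun q => Cconj _) _ => apply G_conj; gtac
  | |- G zf1 _ => apply G_zf1
  | |- G zf2 _ => apply G_zf2
  | |- G (fun q => zf1 q) _ => apply G_zf1
  | |- G (fun q => zf2 q) _ => apply G_zf2
  | _ => idtac
  end.

Lemma DRC_Lin c1 c2 c3 c4 : DRC (Lin c1 c2 c3 c4).
Proof. unfold Lin. drc. Qed.
Lemma G_Lin c1 c2 c3 c4 p : G (Lin c1 c2 c3 c4) p.
Proof. unfold Lin. gtac. Qed.

Lemma app_Lin X c1 c2 c3 c4 p :
  app X (Lin c1 c2 c3 c4) p = c1 * vz1 X p + c2 * vzb1 X p + c3 * vz2 X p + c4 * vzb2 X p.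
Proof.
  unfold Lin.
  rewrite !app_plus by drc. rewrite !app_mult by drc.
  rewrite !app_const, app_zf1, app_zf2, app_czf1, app_czf2. ring.
Qed.

Lemma Dsq (c c0 x : R) : Derive (fun t => c * t ^ 2 + c0)%R x = (2 * c * x)%R.
Proof. apply is_derive_unique. auto_derive; [trivial | ring]. Qed.

Section Ell.
Variables A1 B1 A2 B2 : R.

Lemma pd_uE0 q : pd 0 (uE A1 B1 A2 B2) q = RtoC (2 * A1 * coord q 0).
Proof.
  destruct q as [[[q0 q1] q2] q3]. unfold pd, uE. apply Ceq; unfold Re, Im; cbn [fst snd coord upd RtoC].
  - rewrite <- (Dsq A1 (B1 * q1 ^ 2 + A2 * q2 ^ 2 + B2 * q3 ^ 2 - 1) q0).
    apply Derive_ext. intros t. ring.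
  - apply Derive_const.
Qed.
Lemma pd_uE1 q : pd 1 (uE A1 B1 A2 B2) q = RtoC (2 * B1 * coord q 1).
Proof.
  destruct q as [[[q0 q1] q2] q3]. unfold pd, uE. apply Ceq; unfold Re, Im; cbn [fst snd coord upd RtoC].
  - rewrite <- (Dsq B1 (A1 * q0 ^ 2 + A2 * q2 ^ 2 + B2 * q3 ^ 2 - 1) q1).
    apply Derive_ext. intros t. ring.
  - apply Derive_const.
Qed.
Lemma pd_uE2 q : pd 2 (uE A1 B1 A2 B2) q = RtoC (2 * A2 * coord q 2).
Proof.
  destruct q as [[[q0 q1] q2] q3]. unfold pd, uE. apply Ceq; unfold Re, Im; cbn [fst snd coord upd RtoC].
  - rewrite <- (Dsq A2 (A1 * q0 ^ 2 + B1 * q1 ^ 2 + B2 * q3 ^ 2 - 1) q2).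
    apply Derive_ext. intros t. ring.
  - apply Derive_const.
Qed.
Lemma pd_uE3 q : pd 3 (uE A1 B1 A2 B2) q = RtoC (2 * B2 * coord q 3).
Proof.
  destruct q as [[[q0 q1] q2] q3]. unfold pd, uE. apply Ceq; unfold Re, Im; cbn [fst snd coord upd RtoC].
  - rewrite <- (Dsq B2 (A1 * q0 ^ 2 + B1 * q1 ^ 2 + A2 * q2 ^ 2 - 1) q3).
    apply Derive_ext. intros t. ring.
  - apply Derive_const.
Qed.

Definition al1 : C := RtoC ((A1 + B1) / 2).
Definition be1 : C := RtoC ((A1 - B1) / 2).
Definition al2 : C := RtoC ((A2 + B2) / 2).
Definition be2 : C := RtoC ((A2 - B2) / 2).
Definition aF : CFun := Lin be1 al1 0 0.
Definition abF : CFun := Lin al1 be1 0 0.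
Definition bF : CFun := Lin 0 0 be2 al2.
Definition bbF : CFun := Lin 0 0 al2 be2.

Lemma dz1_uE q : dz1 (uE A1 B1 A2 B2) q = aF q.
Proof.
  unfold dz1, aF, Lin, zf1, zf2. rewrite pd_uE0, pd_uE1. unfold be1, al1.
  apply Ceq; unfold Re, Im; simpl; field.
Qed.
Lemma dz2_uE q : dz2 (uE A1 B1 A2 B2) q = bF q.
Proof.
  unfold dz2, bF, Lin, zf1, zf2. rewrite pd_uE2, pd_uE3. unfold be2, al2.
  apply Ceq; unfold Re, Im; simpl; field.
Qed.
Lemma dzb1_uE q : dzb1 (uE A1 B1 A2 B2) q = abF q.
Proof.
  unfold dzb1, abF, Lin, zf1, zf2. rewrite pd_uE0, pd_uE1. unfold be1, al1.
  apply Ceq; unfold Re, Im; simpl; field.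
Qed.
Lemma dzb2_uE q : dzb2 (uE A1 B1 A2 B2) q = bbF q.
Proof.
  unfold dzb2, bbF, Lin, zf1, zf2. rewrite pd_uE2, pd_uE3. unfold be2, al2.
  apply Ceq; unfold Re, Im; simpl; field.
Qed.

Lemma conj_aF q : Cconj (aF q) = abF q.
Proof. unfold aF, abF, Lin, be1, al1, zf1, zf2. apply Ceq; unfold Re, Im; simpl; ring. Qed.
Lemma conj_bF q : Cconj (bF q) = bbF q.
Proof. unfold bF, bbF, Lin, be2, al2, zf1, zf2. apply Ceq; unfold Re, Im; simpl; ring. Qed.
Lemma conj_abF q : Cconj (abF q) = aF q.
Proof. unfold aF, abF, Lin, be1, al1, zf1, zf2. apply Ceq; unfold Re, Im; simpl; ring. Qed.
Lemma conj_bbF q : Cconj (bbF q) = bF q.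
Proof. unfold bF, bbF, Lin, be2, al2, zf1, zf2. apply Ceq; unfold Re, Im; simpl; ring. Qed.

End Ell.

Section Ell2.
Variables A1 B1 A2 B2 : R.
Hypotheses (HA1 : (0 < A1)%R) (HB1 : (0 < B1)%R) (HA2 : (0 < A2)%R) (HB2 : (0 < B2)%R).

Lemma onM_Qf q : onM A1 B1 A2 B2 q -> Qf A1 B1 A2 B2 q = 1%R.
Proof.
  unfold onM, uE, Qf. intros H. apply (f_equal fst) in H. cbn [fst RtoC] in H. lra.
Qed.

Lemma LC (X : VF) (g : CFun) (p : pt) : G g p ->
  (forall q, onM A1 B1 A2 B2 q -> g q = 0) -> onM A1 B1 A2 B2 p ->
  app X (uE A1 B1 A2 B2) p = 0 -> app X g p = 0.
Proof.
  intros HG Hz Hp Ht.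
  set (c1 := vz1 X p). set (c2 := vz2 X p). set (e1 := vzb1 X p). set (e2 := vzb2 X p).
  set (wr0 := ((fst c1 + fst e1) / 2)%R). set (wi0 := ((snd c1 + snd e1) / 2)%R).
  set (wr1 := ((snd c1 - snd e1) / 2)%R). set (wi1 := ((fst e1 - fst c1) / 2)%R).
  set (wr2 := ((fst c2 + fst e2) / 2)%R). set (wi2 := ((snd c2 + snd e2) / 2)%R).
  set (wr3 := ((snd c2 - snd e2) / 2)%R). set (wi3 := ((fst e2 - fst c2) / 2)%R).
  assert (Tre : (A1 * coord p 0 * wr0 + B1 * coord p 1 * wr1 + A2 * coord p 2 * wr2 + B2 * coord p 3 * wr3 = 0)%R).
  { transitivity (fst (app X (uE A1 B1 A2 B2) p) / 2)%R.
    - unfold app, dz1, dz2, dzb1, dzb2.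
      rewrite pd_uE0, pd_uE1, pd_uE2, pd_uE3. fold c1 c2 e1 e2.
      unfold wr0, wr1, wr2, wr3. simpl. field.
    - rewrite Ht. simpl. field. }
  assert (Tim : (A1 * coord p 0 * wi0 + B1 * coord p 1 * wi1 + A2 * coord p 2 * wi2 + B2 * coord p 3 * wi3 = 0)%R).
  { transitivity (snd (app X (uE A1 B1 A2 B2) p) / 2)%R.
    - unfold app, dz1, dz2, dzb1, dzb2.
      rewrite pd_uE0, pd_uE1, pd_uE2, pd_uE3. fold c1 c2 e1 e2.
      unfold wi0, wi1, wi2, wi3. simpl. field.
    - rewrite Ht. simpl. field. }
  assert (Hp' := onM_Qf p Hp).
  assert (Zre : forall q, Qf A1 B1 A2 B2 q = 1%R -> fre g q = 0%R).
  { intros q Hq. unfold fre. rewrite Hz. reflexivity. unfold onM, uE. unfold Qf in Hq.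
    apply Ceq; unfold Re, Im; cbn [fst snd RtoC]; lra. }
  assert (Zim : forall q, Qf A1 B1 A2 B2 q = 1%R -> fim g q = 0%R).
  { intros q Hq. unfold fim. rewrite Hz. reflexivity. unfold onM, uE. unfold Qf in Hq.
    apply Ceq; unfold Re, Im; cbn [fst snd RtoC]; lra. }
  assert (Cre : forall k, (k < 4)%nat -> continuous (dR k (fre g)) p) by (intros k Hk; exact (proj1 (proj2 HG k Hk))).
  assert (Cim : forall k, (k < 4)%nat -> continuous (dR k (fim g)) p) by (intros k Hk; exact (proj2 (proj2 HG k Hk))).
  pose proof (tangentL A1 B1 A2 B2 (fre g) p wr0 wr1 wr2 wr3 HA1 HB1 HA2 HB2 (G_DR_re g p HG) Cre Zre Hp' Tre) as S1.
  pose proof (tangentL A1 B1 A2 B2 (fim g) p wr0 wr1 wr2 wr3 HA1 HB1 HA2 HB2 (G_DR_im g p HG) Cim Zim Hp' Tre) as S2.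
  pose proof (tangentL A1 B1 A2 B2 (fre g) p wi0 wi1 wi2 wi3 HA1 HB1 HA2 HB2 (G_DR_re g p HG) Cre Zre Hp' Tim) as S3.
  pose proof (tangentL A1 B1 A2 B2 (fim g) p wi0 wi1 wi2 wi3 HA1 HB1 HA2 HB2 (G_DR_im g p HG) Cim Zim Hp' Tim) as S4.
  unfold app, dz1, dz2, dzb1, dzb2. rewrite !pd_eq. fold c1 c2 e1 e2.
  unfold wr0, wr1, wr2, wr3, wi0, wi1, wi2, wi3 in *.
  apply Ceq; unfold Re, Im; simpl.
  - set (r0 := dR 0 (fre g) p) in *. set (r1 := dR 1 (fre g) p) in *.
    set (r2 := dR 2 (fre g) p) in *. set (r3 := dR 3 (fre g) p) in *.
    set (i0 := dR 0 (fim g) p) in *. set (i1 := dR 1 (fim g) p) in *.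
    set (i2 := dR 2 (fim g) p) in *. set (i3 := dR 3 (fim g) p) in *.
    transitivity ((((fst c1 + fst e1) / 2) * r0 + ((snd c1 - snd e1) / 2) * r1 +
       ((fst c2 + fst e2) / 2) * r2 + ((snd c2 - snd e2) / 2) * r3)
      - (((snd c1 + snd e1) / 2) * i0 + ((fst e1 - fst c1) / 2) * i1 +
       ((snd c2 + snd e2) / 2) * i2 + ((fst e2 - fst c2) / 2) * i3))%R.
    field. rewrite S1, S4. ring.
  - set (r0 := dR 0 (fre g) p) in *. set (r1 := dR 1 (fre g) p) in *.
    set (r2 := dR 2 (fre g) p) in *. set (r3 := dR 3 (fre g) p) in *.
    set (i0 := dR 0 (fim g) p) in *. set (i1 := dR 1 (fim g) p) in *.
    set (i2 := dR 2 (fim g) p) in *. set (i3 := dR 3 (fim g) p) in *.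
    transitivity ((((fst c1 + fst e1) / 2) * i0 + ((snd c1 - snd e1) / 2) * i1 +
       ((fst c2 + fst e2) / 2) * i2 + ((snd c2 - snd e2) / 2) * i3)
      + (((snd c1 + snd e1) / 2) * r0 + ((fst e1 - fst c1) / 2) * r1 +
       ((snd c2 + snd e2) / 2) * r2 + ((fst e2 - fst c2) / 2) * r3))%R.
    field. rewrite S2, S3. ring.
Qed.

End Ell2.

Open Scope C_scope.

Section Main.
Variables A1 B1 A2 B2 : R.
Hypotheses (HA1 : (0 < A1)%R) (HB1 : (0 < B1)%R) (HA2 : (0 < A2)%R) (HB2 : (0 < B2)%R).

Notation U := (uE A1 B1 A2 B2).
Notation th := (thetaE A1 B1 A2 B2).
Notation Z := (Z1 A1 B1 A2 B2).
Notation Zb := (Z1b A1 B1 A2 B2).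
Notation a_ := (aF A1 B1).
Notation ab_ := (abF A1 B1).
Notation b_ := (bF A2 B2).
Notation bb_ := (bbF A2 B2).
Notation al1_ := (al1 A1 B1).
Notation be1_ := (be1 A1 B1).
Notation al2_ := (al2 A2 B2).
Notation be2_ := (be2 A2 B2).

Lemma DRC_aF : DRC a_. Proof. apply DRC_Lin. Qed.
Lemma DRC_abF : DRC ab_. Proof. apply DRC_Lin. Qed.
Lemma DRC_bF : DRC b_. Proof. apply DRC_Lin. Qed.
Lemma DRC_bbF : DRC bb_. Proof. apply DRC_Lin. Qed.
Lemma G_aF p : G a_ p. Proof. apply G_Lin. Qed.
Lemma G_abF p : G ab_ p. Proof. apply G_Lin. Qed.
Lemma G_bF p : G b_ p. Proof. apply G_Lin. Qed.
Lemma G_bbF p : G bb_ p. Proof. apply G_Lin. Qed.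

Lemma app_aF X q : app X a_ q = be1_ * vz1 X q + al1_ * vzb1 X q.
Proof. unfold aF. rewrite app_Lin. ring. Qed.
Lemma app_abF X q : app X ab_ q = al1_ * vz1 X q + be1_ * vzb1 X q.
Proof. unfold abF. rewrite app_Lin. ring. Qed.
Lemma app_bF X q : app X b_ q = be2_ * vz2 X q + al2_ * vzb2 X q.
Proof. unfold bF. rewrite app_Lin. ring. Qed.
Lemma app_bbF X q : app X bb_ q = al2_ * vz2 X q + be2_ * vzb2 X q.
Proof. unfold bbF. rewrite app_Lin. ring. Qed.

Lemma conjR (r : R) : Cconj (RtoC r) = RtoC r.
Proof. apply Ceq; unfold Re, Im; simpl; ring. Qed.

Lemma vz1_Z : vz1 Z = b_.
Proof. apply functional_extensionality. intros q. unfold Z1; simpl. apply dz2_uE. Qed.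
Lemma vz2_Z : vz2 Z = fun q => - a_ q.
Proof. apply functional_extensionality. intros q. unfold Z1; simpl. rewrite dz1_uE. reflexivity. Qed.
Lemma vzb1_Z : vzb1 Z = fun _ => RtoC 0.
Proof. reflexivity. Qed.
Lemma vzb2_Z : vzb2 Z = fun _ => RtoC 0.
Proof. reflexivity. Qed.
Lemma vz1_Zb : vz1 Zb = fun _ => RtoC 0.
Proof. apply functional_extensionality. intros q. unfold Z1b, Z1; simpl. apply conjR. Qed.
Lemma vz2_Zb : vz2 Zb = fun _ => RtoC 0.
Proof. apply functional_extensionality. intros q. unfold Z1b, Z1; simpl. apply conjR. Qed.
Lemma vzb1_Zb : vzb1 Zb = bb_.
Proof. apply functional_extensionality. intros q. unfold Z1b, Z1; simpl. rewrite dz2_uE. apply conj_bF. Qed.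
Lemma vzb2_Zb : vzb2 Zb = fun q => - ab_ q.
Proof. apply functional_extensionality. intros q. unfold Z1b, Z1; simpl. rewrite dz1_uE, Copp_conj, conj_aF. reflexivity. Qed.

Lemma fz1_th : fz1 th = fun q => - (Ci / 2) * a_ q.
Proof. apply functional_extensionality. intros q. unfold thetaE; simpl. rewrite dz1_uE. reflexivity. Qed.
Lemma fz2_th : fz2 th = fun q => - (Ci / 2) * b_ q.
Proof. apply functional_extensionality. intros q. unfold thetaE; simpl. rewrite dz2_uE. reflexivity. Qed.
Lemma fzb1_th : fzb1 th = fun q => (Ci / 2) * ab_ q.
Proof. apply functional_extensionality. intros q. unfold thetaE; simpl. rewrite dzb1_uE. reflexivity. Qed.
Lemma fzb2_th : fzb2 th = fun q => (Ci / 2) * bb_ q.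
Proof. apply functional_extensionality. intros q. unfold thetaE; simpl. rewrite dzb2_uE. reflexivity. Qed.

Ltac vzrw := rewrite ?vz1_Z, ?vz2_Z, ?vzb1_Z, ?vzb2_Z, ?vz1_Zb, ?vz2_Zb, ?vzb1_Zb, ?vzb2_Zb,
  ?fz1_th, ?fz2_th, ?fzb1_th, ?fzb2_th.

Lemma ev_th_Z : ev th Z = fun _ => RtoC 0.
Proof. apply functional_extensionality. intros q. unfold ev. vzrw. ring. Qed.
Lemma ev_th_Zb : ev th Zb = fun _ => RtoC 0.
Proof. apply functional_extensionality. intros q. unfold ev. vzrw. ring. Qed.

Lemma app_U X q : app X U q = vz1 X q * a_ q + vz2 X q * b_ q + vzb1 X q * ab_ q + vzb2 X q * bb_ q.
Proof. unfold app. rewrite dz1_uE, dz2_uE, dzb1_uE, dzb2_uE. reflexivity. Qed.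
Lemma appZ_U q : app Z U q = 0.
Proof. rewrite app_U. vzrw. ring. Qed.
Lemma appZb_U q : app Zb U q = 0.
Proof. rewrite app_U. vzrw. ring. Qed.

Definition Dfun : CFun := fun q => al2_ * (a_ q * ab_ q) + al1_ * (b_ q * bb_ q).
Definition Efun : CFun := fun q => al2_ * be1_ * (ab_ q * b_ q) - al1_ * be2_ * (a_ q * bb_ q).
Definition Ebfun : CFun := fun q => al2_ * be1_ * (a_ q * bb_ q) - al1_ * be2_ * (ab_ q * b_ q).

Lemma DRC_Dfun : DRC Dfun.
Proof. unfold Dfun. drc; first [apply DRC_aF | apply DRC_abF | apply DRC_bF | apply DRC_bbF]. Qed.
Lemma DRC_Efun : DRC Efun.
Proof. unfold Efun, Cminus. drc; first [apply DRC_aF | apply DRC_abF | apply DRC_bF | apply DRC_bbF]. Qed.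
Lemma G_Dfun p : G Dfun p.
Proof. unfold Dfun. gtac; first [apply G_aF | apply G_abF | apply G_bF | apply G_bbF]. Qed.
Lemma G_Efun p : G Efun p.
Proof. unfold Efun, Cminus. gtac; first [apply G_aF | apply G_abF | apply G_bF | apply G_bbF]. Qed.

Ltac drcF := first [apply DRC_aF | apply DRC_abF | apply DRC_bF | apply DRC_bbF | apply DRC_const
  | apply DRC_Dfun | apply DRC_Efun | drc].

Lemma app_Dfun X q : app X Dfun q =
  al2_ * (app X a_ q * ab_ q + a_ q * app X ab_ q) + al1_ * (app X b_ q * bb_ q + b_ q * app X bb_ q).
Proof.
  unfold Dfun.
  rewrite app_plus by (drc; drcF). rewrite !app_mult by (drc; drcF).
  rewrite !app_const. ring.
Qed.
Lemma app_Efun X q : app X Efun q =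
  al2_ * be1_ * (app X ab_ q * b_ q + ab_ q * app X b_ q) - al1_ * be2_ * (app X a_ q * bb_ q + a_ q * app X bb_ q).
Proof.
  unfold Efun, Cminus.
  rewrite app_plus by (drc; drcF). rewrite app_opp. rewrite !app_mult by (drc; drcF).
  rewrite !app_const. ring.
Qed.

Lemma appZ_D q : app Z Dfun q = Efun q.
Proof.
  rewrite app_Dfun, app_aF, app_abF, app_bF, app_bbF. vzrw. unfold Efun. ring.
Qed.
Lemma appZb_D q : app Zb Dfun q = Ebfun q.
Proof.
  rewrite app_Dfun, app_aF, app_abF, app_bF, app_bbF. vzrw. unfold Ebfun. ring.
Qed.
Lemma appZb_E q : app Zb Efun q =
  al2_ * be1_ * (be1_ * bb_ q * b_ q - al2_ * ab_ q * ab_ q)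
  - al1_ * be2_ * (al1_ * bb_ q * bb_ q - be2_ * a_ q * ab_ q).
Proof.
  rewrite app_Efun, app_aF, app_abF, app_bF, app_bbF. vzrw. ring.
Qed.

Lemma W1 q : vz1 (bracket Z Zb) q = al2_ * ab_ q.
Proof. unfold bracket; cbn [vz1]. vzrw. rewrite app_const, app_bF. vzrw. ring. Qed.
Lemma W2 q : vz2 (bracket Z Zb) q = al1_ * bb_ q.
Proof. unfold bracket; cbn [vz2]. vzrw. rewrite app_const, app_opp, app_aF. vzrw. ring. Qed.
Lemma W3 q : vzb1 (bracket Z Zb) q = - (al2_ * a_ q).
Proof. unfold bracket; cbn [vzb1]. vzrw. rewrite app_const, app_bbF. vzrw. ring. Qed.
Lemma W4 q : vzb2 (bracket Z Zb) q = - (al1_ * b_ q).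
Proof. unfold bracket; cbn [vzb2]. vzrw. rewrite app_const, app_opp, app_abF. vzrw. ring. Qed.

Lemma hE_D : hE A1 B1 A2 B2 = Dfun.
Proof.
  apply functional_extensionality. intros q. unfold hE, Defs.d1.
  rewrite ev_th_Z, ev_th_Zb, !app_const. unfold ev. rewrite W1, W2, W3, W4. vzrw.
  unfold Dfun. apply Ceq; unfold Re, Im; simpl; field.
Qed.

End Main.

Open Scope C_scope.

Lemma app_ev X f Y q :
  DRC (fz1 f) -> DRC (fz2 f) -> DRC (fzb1 f) -> DRC (fzb2 f) ->
  DRC (vz1 Y) -> DRC (vz2 Y) -> DRC (vzb1 Y) -> DRC (vzb2 Y) ->
  app X (ev f Y) q =
    app X (fz1 f) q * vz1 Y q + fz1 f q * app X (vz1 Y) q +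
    app X (fz2 f) q * vz2 Y q + fz2 f q * app X (vz2 Y) q +
    app X (fzb1 f) q * vzb1 Y q + fzb1 f q * app X (vzb1 Y) q +
    app X (fzb2 f) q * vzb2 Y q + fzb2 f q * app X (vzb2 Y) q.
Proof.
  intros H1 H2 H3 H4 H5 H6 H7 H8. unfold ev.
  rewrite !app_plus by (drc; assumption).
  rewrite !app_mult by assumption. ring.
Qed.

Lemma G_ev f Y q :
  G (fz1 f) q -> G (fz2 f) q -> G (fzb1 f) q -> G (fzb2 f) q ->
  G (vz1 Y) q -> G (vz2 Y) q -> G (vzb1 Y) q -> G (vzb2 Y) q -> G (ev f Y) q.
Proof.
  intros. unfold ev. gtac; assumption.
Qed.

Lemma LC' A1 B1 A2 B2 (X : VF) (g : CFun) (c : C) (p : pt) :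
  (0 < A1)%R -> (0 < B1)%R -> (0 < A2)%R -> (0 < B2)%R -> G g p ->
  (forall q, onM A1 B1 A2 B2 q -> g q = c) -> onM A1 B1 A2 B2 p ->
  app X (uE A1 B1 A2 B2) p = 0 -> app X g p = 0.
Proof.
  intros H1 H2 H3 H4 HG Hz Hp Ht.
  assert (HL : app X (fun q => g q + - c) p = 0).
  { apply (LC A1 B1 A2 B2 H1 H2 H3 H4); auto.
    - apply G_plus. exact HG. apply G_const.
    - intros q Hq. rewrite (Hz q Hq). ring. }
  rewrite app_plus in HL. rewrite app_const in HL. rewrite <- HL. ring.
  exact (G_DRC g p HG). apply DRC_const.
Qed.

Lemma Ci_cancel (w : C) : Ci * w = 0 -> w = 0.
Proof.
  intros H. assert (H1 := f_equal fst H). assert (H2 := f_equal snd H).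
  simpl in H1, H2. apply Ceq; unfold Re, Im; simpl; lra.
Qed.

Lemma lc_gen (x x0 y y0 z k : C) : x = x0 -> y = y0 -> z = (y - y0) - k * (x - x0) -> z = 0.
Proof. intros -> -> ->. ring. Qed.

Lemma lc_add (x y z : C) : x = 0 -> y = 0 -> z = x + y -> z = 0.
Proof. intros -> -> ->. ring. Qed.

Lemma app_cmul X (c : C) f p : DRC f -> app X (fun q => c * f q) p = c * app X f p.
Proof. intros Hf. rewrite app_mult. rewrite app_const. ring. apply DRC_const. exact Hf. Qed.

Lemma lc_lin (x y z c d : C) : x = 0 -> y = 0 -> z = c * x + d * y -> z = 0.
Proof. intros -> -> ->. ring. Qed.

Lemma zero_eq (x y : C) : x - y = 0 -> x = y.
Proof. intros H. transitivity ((x - y) + y). ring. rewrite H. ring. Qed.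

Lemma Ci_s (s : C) : - Ci * s - 1 = 0 -> s = Ci.
Proof.
  intros H. apply zero_eq. transitivity (Ci * (- Ci * s - 1)).
  apply Ceq; unfold Re, Im; simpl; ring. rewrite H. ring.
Qed.

Lemma lc_sub (x y z : C) : x = 0 -> y = 0 -> z = x - y -> z = 0.
Proof. intros -> -> ->. ring. Qed.

Section Main2.
Variables A1 B1 A2 B2 : R.
Hypotheses (HA1 : (0 < A1)%R) (HB1 : (0 < B1)%R) (HA2 : (0 < A2)%R) (HB2 : (0 < B2)%R).

Notation U := (uE A1 B1 A2 B2).
Notation th := (thetaE A1 B1 A2 B2).
Notation Z := (Z1 A1 B1 A2 B2).
Notation Zb := (Z1b A1 B1 A2 B2).
Notation a_ := (aF A1 B1).
Notation ab_ := (abF A1 B1).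
Notation b_ := (bF A2 B2).
Notation bb_ := (bbF A2 B2).
Notation al1_ := (al1 A1 B1).
Notation be1_ := (be1 A1 B1).
Notation al2_ := (al2 A2 B2).
Notation be2_ := (be2 A2 B2).
Notation D_ := (Dfun A1 B1 A2 B2).
Notation E_ := (Efun A1 B1 A2 B2).
Notation Eb_ := (Ebfun A1 B1 A2 B2).
Notation M_ := (onM A1 B1 A2 B2).

Ltac vzrw := rewrite ?vz1_Z, ?vz2_Z, ?vzb1_Z, ?vzb2_Z, ?vz1_Zb, ?vz2_Zb, ?vzb1_Zb, ?vzb2_Zb,
  ?fz1_th, ?fz2_th, ?fzb1_th, ?fzb2_th; cbv beta.

Lemma conj_al1 : Cconj al1_ = al1_. Proof. apply conjR. Qed.
Lemma conj_al2 : Cconj al2_ = al2_. Proof. apply conjR. Qed.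
Lemma conj_be1 : Cconj be1_ = be1_. Proof. apply conjR. Qed.
Lemma conj_be2 : Cconj be2_ = be2_. Proof. apply conjR. Qed.

Definition Dr (q : pt) : R :=
  ((A2 + B2) / 2 * ((A1 * coord q 0) ^ 2 + (B1 * coord q 1) ^ 2) +
   (A1 + B1) / 2 * ((A2 * coord q 2) ^ 2 + (B2 * coord q 3) ^ 2))%R.

Lemma Dreal q : D_ q = RtoC (Dr q).
Proof.
  unfold Dfun, Dr, aF, abF, bF, bbF, Lin, zf1, zf2, al1, al2, be1, be2.
  apply Ceq; unfold Re, Im; simpl; field.
Qed.

Lemma Dr_pos q : M_ q -> (0 < Dr q)%R.
Proof.
  intros Hq. apply onM_Qf in Hq. unfold Qf in Hq. unfold Dr.
  destruct q as [[[x1 y1] x2] y2]. cbn [coord fst snd] in *.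
  set (c1 := ((A2 + B2) / 2)%R). set (c2 := ((A1 + B1) / 2)%R).
  assert (Hc1 : (0 < c1)%R) by (unfold c1; lra). assert (Hc2 : (0 < c2)%R) by (unfold c2; lra).
  set (m := Rmin (Rmin (c1 * A1) (c1 * B1)) (Rmin (c2 * A2) (c2 * B2))).
  assert (Hm : (0 < m)%R).
  { unfold m. apply Rmin_pos; apply Rmin_pos; apply Rmult_lt_0_compat; assumption. }
  assert (m1 : (m <= c1 * A1)%R) by (unfold m; eapply Rle_trans; [apply Rmin_l | apply Rmin_l]).
  assert (m2 : (m <= c1 * B1)%R) by (unfold m; eapply Rle_trans; [apply Rmin_l | apply Rmin_r]).
  assert (m3 : (m <= c2 * A2)%R) by (unfold m; eapply Rle_trans; [apply Rmin_r | apply Rmin_l]).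
  assert (m4 : (m <= c2 * B2)%R) by (unfold m; eapply Rle_trans; [apply Rmin_r | apply Rmin_r]).
  assert (T1 : (m * (A1 * x1 ^ 2) <= c1 * (A1 * x1) ^ 2)%R).
  { replace (c1 * (A1 * x1) ^ 2)%R with (c1 * A1 * (A1 * x1 ^ 2))%R by ring.
    apply Rmult_le_compat_r; [|exact m1]. assert (0 <= x1 ^ 2)%R by (apply pow2_ge_0). nra. }
  assert (T2 : (m * (B1 * y1 ^ 2) <= c1 * (B1 * y1) ^ 2)%R).
  { replace (c1 * (B1 * y1) ^ 2)%R with (c1 * B1 * (B1 * y1 ^ 2))%R by ring.
    apply Rmult_le_compat_r; [|exact m2]. assert (0 <= y1 ^ 2)%R by (apply pow2_ge_0). nra. }
  assert (T3 : (m * (A2 * x2 ^ 2) <= c2 * (A2 * x2) ^ 2)%R).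
  { replace (c2 * (A2 * x2) ^ 2)%R with (c2 * A2 * (A2 * x2 ^ 2))%R by ring.
    apply Rmult_le_compat_r; [|exact m3]. assert (0 <= x2 ^ 2)%R by (apply pow2_ge_0). nra. }
  assert (T4 : (m * (B2 * y2 ^ 2) <= c2 * (B2 * y2) ^ 2)%R).
  { replace (c2 * (B2 * y2) ^ 2)%R with (c2 * B2 * (B2 * y2 ^ 2))%R by ring.
    apply Rmult_le_compat_r; [|exact m4]. assert (0 <= y2 ^ 2)%R by (apply pow2_ge_0). nra. }
  assert (Hsum : (m * (A1 * x1 ^ 2 + B1 * y1 ^ 2 + A2 * x2 ^ 2 + B2 * y2 ^ 2) = m)%R) by (rewrite Hq; ring).
  lra.
Qed.

Lemma Dfun_nz q : M_ q -> D_ q <> 0.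
Proof.
  intros Hq H. rewrite Dreal in H. apply (f_equal fst) in H. simpl in H.
  pose proof (Dr_pos q Hq). lra.
Qed.

Lemma conjD q : Cconj (D_ q) = D_ q.
Proof. rewrite Dreal. apply conjR. Qed.


Variables (T : VF) (th1 om : Form) (Rc : pt -> R) (Atau : CFun).
Hypothesis HTC : VF_C1 T.
Hypothesis Hreal : forall p, vzb1 T p = Cconj (vz1 T p) /\ vzb2 T p = Cconj (vz2 T p).
Hypothesis HTM : forall p, M_ p ->
  app T U p = RtoC 0 /\ ev th T p = RtoC 1 /\ Defs.d1 th T Z p = RtoC 0 /\ Defs.d1 th T Zb p = RtoC 0.

Lemma GT1 q : G (vz1 T) q. Proof. apply C1_G. exact (proj1 HTC). Qed.
Lemma GT2 q : G (vz2 T) q. Proof. apply C1_G. exact (proj1 (proj2 HTC)). Qed.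
Lemma GT3 q : G (vzb1 T) q. Proof. apply C1_G. exact (proj1 (proj2 (proj2 HTC))). Qed.
Lemma GT4 q : G (vzb2 T) q. Proof. apply C1_G. exact (proj2 (proj2 (proj2 HTC))). Qed.
Lemma DT1 : DRC (vz1 T). Proof. exact (G_DRC _ _ (GT1 (0%R,0%R,0%R,0%R))). Qed.
Lemma DT2 : DRC (vz2 T). Proof. exact (G_DRC _ _ (GT2 (0%R,0%R,0%R,0%R))). Qed.
Lemma DT3 : DRC (vzb1 T). Proof. exact (G_DRC _ _ (GT3 (0%R,0%R,0%R,0%R))). Qed.
Lemma DT4 : DRC (vzb2 T). Proof. exact (G_DRC _ _ (GT4 (0%R,0%R,0%R,0%R))). Qed.

Lemma Gth1 q : G (fz1 th) q. Proof. rewrite fz1_th. gtac. apply G_aF. Qed.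
Lemma Gth2 q : G (fz2 th) q. Proof. rewrite fz2_th. gtac. apply G_bF. Qed.
Lemma Gth3 q : G (fzb1 th) q. Proof. rewrite fzb1_th. gtac. apply G_abF. Qed.
Lemma Gth4 q : G (fzb2 th) q. Proof. rewrite fzb2_th. gtac. apply G_bbF. Qed.

Ltac dF := lazymatch goal with
  | |- DRC (aF _ _) => apply DRC_aF
  | |- DRC (abF _ _) => apply DRC_abF
  | |- DRC (bF _ _) => apply DRC_bF
  | |- DRC (bbF _ _) => apply DRC_bbF
  | |- DRC (fun q => aF _ _ q) => apply DRC_aF
  | |- DRC (fun q => abF _ _ q) => apply DRC_abF
  | |- DRC (fun q => bF _ _ q) => apply DRC_bF
  | |- DRC (fun q => bbF _ _ q) => apply DRC_bbF
  | |- DRC (Dfun _ _ _ _) => apply DRC_Dfun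
  | |- DRC (Efun _ _ _ _) => apply DRC_Efun
  | |- DRC (fun q => Dfun _ _ _ _ q) => apply DRC_Dfun
  | |- DRC (fun q => Efun _ _ _ _ q) => apply DRC_Efun
  end.

Ltac dsolve := lazymatch goal with
  | |- DRC (fz1 th) => exact (G_DRC _ _ (Gth1 (0%R,0%R,0%R,0%R)))
  | |- DRC (fz2 th) => exact (G_DRC _ _ (Gth2 (0%R,0%R,0%R,0%R)))
  | |- DRC (fzb1 th) => exact (G_DRC _ _ (Gth3 (0%R,0%R,0%R,0%R)))
  | |- DRC (fzb2 th) => exact (G_DRC _ _ (Gth4 (0%R,0%R,0%R,0%R)))
  | |- DRC (vz1 T) => exact DT1
  | |- DRC (vz2 T) => exact DT2
  | |- DRC (vzb1 T) => exact DT3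
  | |- DRC (vzb2 T) => exact DT4
  end.

Lemma Tval q : M_ q -> D_ q * vz1 T q = Ci * al2_ * ab_ q /\ D_ q * vz2 T q = Ci * al1_ * bb_ q.
Proof.
  intros Hq. unfold Dfun. destruct (HTM q Hq) as [E1 [E2 [E3 _]]].
  destruct (Hreal q) as [R1 R2].
  rewrite app_U in E1.
  unfold ev in E2. vzrw.
  unfold Defs.d1 in E3. rewrite ev_th_Z, app_const in E3.
  assert (LC0 : app Z (ev th T) q = 0).
  { apply (LC' A1 B1 A2 B2 Z _ (RtoC 1) q HA1 HB1 HA2 HB2).
    - apply G_ev; [apply Gth1 | apply Gth2 | apply Gth3 | apply Gth4 | apply GT1 | apply GT2 | apply GT3 | apply GT4].
    - intros x Hx. exact (proj1 (proj2 (HTM x Hx))).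
    - exact Hq.
    - apply appZ_U. }
  assert (LCt := LC0).
  rewrite app_ev in LCt by dsolve.
  rewrite LC0 in E3.
  assert (E3' : ev th (bracket T Z) q = 0).
  { transitivity (- (0 - 0 - ev th (bracket T Z) q)). ring. rewrite E3. ring. }
  clear E3 LC0.
  unfold ev, bracket in E3'. cbn [vz1 vz2 vzb1 vzb2] in E3'.
  rewrite vz1_Z, vz2_Z, vzb1_Z, vzb2_Z in E3'.
  rewrite app_bF, app_opp, app_aF, !app_const in E3'.
  rewrite fz1_th, fz2_th, fzb1_th, fzb2_th in E3', LCt, E2. cbv beta in E3', LCt, E2.
  rewrite !app_cmul in LCt by dF.
  rewrite app_aF, app_abF, app_bF, app_bbF in LCt.
  rewrite vz1_Z, vz2_Z, vzb1_Z, vzb2_Z in LCt. cbv beta in LCt.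
  set (t1 := vz1 T q) in *. set (t2 := vz2 T q) in *.
  set (t3 := vzb1 T q) in *. set (t4 := vzb2 T q) in *.
  set (a := a_ q) in *. set (b := b_ q) in *. set (ab := ab_ q) in *. set (bb := bb_ q) in *.
  assert (K0 : Ci * (al1_ * b * t3 - al2_ * a * t4) = 0).
  { apply (lc_add _ _ _ LCt E3'). field. }
  apply Ci_cancel in K0.
  assert (cb : Cconj b = bb) by (unfold b, bb; apply conj_bF).
  assert (ca : Cconj a = ab) by (unfold a, ab; apply conj_aF).
  assert (Kc : al1_ * bb * t1 - al2_ * ab * t2 = 0).
  { apply (f_equal Cconj) in K0. rewrite Cminus_conj, !Cmult_conj, conj_al1, conj_al2, R1, R2,
      !Cconj_conj, cb, ca, conjR in K0. exact K0. }
  assert (Hs0 : - Ci * (a * t1 + b * t2) - 1 = 0).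
  { apply (lc_gen _ _ _ _ _ (Ci / 2) E1 E2). field. }
  apply Ci_s in Hs0.
  assert (Hs1 : a * t1 + b * t2 - Ci = 0) by (rewrite Hs0; ring).
  split; apply zero_eq.
  - apply (lc_lin _ _ _ (al2_ * ab) b Hs1 Kc). field.
  - apply (lc_lin _ _ _ (al1_ * bb) (- a) Hs1 Kc). field.
Qed.


Lemma conjCi : Cconj Ci = - Ci.
Proof. apply Ceq; unfold Re, Im; simpl; ring. Qed.

Lemma Tvalb q : M_ q -> D_ q * vzb1 T q = - Ci * al2_ * a_ q /\ D_ q * vzb2 T q = - Ci * al1_ * b_ q.
Proof.
  intros Hq. destruct (Tval q Hq) as [H1 H2]. destruct (Hreal q) as [R1 R2].
  apply (f_equal Cconj) in H1. apply (f_equal Cconj) in H2.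
  rewrite !Cmult_conj, conjD, conjCi, conj_al2, conj_abF in H1.
  rewrite !Cmult_conj, conjD, conjCi, conj_al1, conj_bbF in H2.
  rewrite R1, R2. split; [rewrite H1 | rewrite H2]; ring.
Qed.

Lemma ev_comb f X Y W q c m n :
  c * vz1 X q = m * vz1 Y q + n * vz1 W q -> c * vz2 X q = m * vz2 Y q + n * vz2 W q ->
  c * vzb1 X q = m * vzb1 Y q + n * vzb1 W q -> c * vzb2 X q = m * vzb2 Y q + n * vzb2 W q ->
  c * ev f X q = m * ev f Y q + n * ev f W q.
Proof.
  intros H1 H2 H3 H4. unfold ev.
  transitivity (fz1 f q * (c * vz1 X q) + fz2 f q * (c * vz2 X q) + fzb1 f q * (c * vzb1 X q)
     + fzb2 f q * (c * vzb2 X q)). ring.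
  rewrite H1, H2, H3, H4. ring.
Qed.

Lemma WT q : M_ q -> forall f, ev f (bracket Z Zb) q = (- Ci * D_ q) * ev f T q.
Proof.
  intros Hq f. destruct (Tval q Hq) as [H1 H2]. destruct (Tvalb q Hq) as [H3 H4].
  transitivity (1 * ev f (bracket Z Zb) q). ring.
  rewrite (ev_comb f (bracket Z Zb) T Zb q 1 (- Ci * D_ q) 0). ring.
  - rewrite W1. transitivity (- Ci * (D_ q * vz1 T q)). rewrite H1.
    apply Ceq; unfold Re, Im; simpl; ring. ring.
  - rewrite W2. transitivity (- Ci * (D_ q * vz2 T q)). rewrite H2.
    apply Ceq; unfold Re, Im; simpl; ring. ring.
  - rewrite W3. transitivity (- Ci * (D_ q * vzb1 T q)). rewrite H3.
    apply Ceq; unfold Re, Im; simpl; ring. ring.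
  - rewrite W4. transitivity (- Ci * (D_ q * vzb2 T q)). rewrite H4.
    apply Ceq; unfold Re, Im; simpl; ring. ring.
Qed.

Lemma ev_fconj_Z f q : ev (fconj f) Z q = Cconj (ev f Zb q).
Proof.
  unfold ev, fconj; cbn [fz1 fz2 fzb1 fzb2]. vzrw.
  rewrite !Cplus_conj, !Cmult_conj, Copp_conj, conj_bbF, conj_abF, conjR. ring.
Qed.
Lemma ev_fconj_Zb f q : ev (fconj f) Zb q = Cconj (ev f Z q).
Proof.
  unfold ev, fconj; cbn [fz1 fz2 fzb1 fzb2]. vzrw.
  rewrite !Cplus_conj, !Cmult_conj, Copp_conj, conj_aF, conj_bF, conjR. ring.
Qed.
Lemma ev_fscale c f X q : ev (fscale c f) X q = c q * ev f X q.
Proof. unfold ev, fscale; cbn [fz1 fz2 fzb1 fzb2]. ring. Qed.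

Lemma GZ1 q : G (vz1 Z) q. Proof. rewrite vz1_Z. apply G_bF. Qed.
Lemma GZ2 q : G (vz2 Z) q. Proof. rewrite vz2_Z. gtac. apply G_aF. Qed.
Lemma GZ3 q : G (vzb1 Z) q. Proof. rewrite vzb1_Z. gtac. Qed.
Lemma GZ4 q : G (vzb2 Z) q. Proof. rewrite vzb2_Z. gtac. Qed.
Lemma GZb1 q : G (vz1 Zb) q. Proof. rewrite vz1_Zb. gtac. Qed.
Lemma GZb2 q : G (vz2 Zb) q. Proof. rewrite vz2_Zb. gtac. Qed.
Lemma GZb3 q : G (vzb1 Zb) q. Proof. rewrite vzb1_Zb. apply G_bbF. Qed.
Lemma GZb4 q : G (vzb2 Zb) q. Proof. rewrite vzb2_Zb. gtac. apply G_abF. Qed.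

Variable Hth1C : Form_C1 th1.
Hypothesis Hth1M : forall p, M_ p -> ev th1 T p = RtoC 0 /\ ev th1 Z p = RtoC 1 /\ ev th1 Zb p = RtoC 0.
Hypothesis HomC : Form_C1 om.

Lemma Gf1 f q : Form_C1 f -> G (fz1 f) q. Proof. intros H. apply C1_G. exact (proj1 H). Qed.
Lemma Gf2 f q : Form_C1 f -> G (fz2 f) q. Proof. intros H. apply C1_G. exact (proj1 (proj2 H)). Qed.
Lemma Gf3 f q : Form_C1 f -> G (fzb1 f) q. Proof. intros H. apply C1_G. exact (proj1 (proj2 (proj2 H))). Qed.
Lemma Gf4 f q : Form_C1 f -> G (fzb2 f) q. Proof. intros H. apply C1_G. exact (proj2 (proj2 (proj2 H))). Qed.

Lemma Gev_Z f q : Form_C1 f -> G (ev f Z) q.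
Proof. intros H. apply G_ev; [apply Gf1 | apply Gf2 | apply Gf3 | apply Gf4 | apply GZ1 | apply GZ2 | apply GZ3 | apply GZ4]; exact H. Qed.
Lemma Gev_Zb f q : Form_C1 f -> G (ev f Zb) q.
Proof. intros H. apply G_ev; [apply Gf1 | apply Gf2 | apply Gf3 | apply Gf4 | apply GZb1 | apply GZb2 | apply GZb3 | apply GZb4]; exact H. Qed.
Lemma Gev_T f q : Form_C1 f -> G (ev f T) q.
Proof. intros H. apply G_ev; [apply Gf1 | apply Gf2 | apply Gf3 | apply Gf4 | apply GT1 | apply GT2 | apply GT3 | apply GT4]; exact H. Qed.

Lemma d1th1_ZZb q : M_ q -> Defs.d1 th1 Z Zb q = 0.
Proof.
  intros Hq. unfold Defs.d1.
  rewrite (WT q Hq), (proj1 (Hth1M q Hq)).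
  rewrite (LC' A1 B1 A2 B2 Z (ev th1 Zb) (RtoC 0) q HA1 HB1 HA2 HB2 (Gev_Zb th1 q Hth1C)).
  rewrite (LC' A1 B1 A2 B2 Zb (ev th1 Z) (RtoC 1) q HA1 HB1 HA2 HB2 (Gev_Z th1 q Hth1C)).
  ring.
  - intros x Hx. exact (proj1 (proj2 (Hth1M x Hx))).
  - exact Hq.
  - apply appZb_U.
  - intros x Hx. exact (proj2 (proj2 (Hth1M x Hx))).
  - exact Hq.
  - apply appZ_U.
Qed.


Hypothesis HTWp : forall p, M_ p ->
    (forall X Y, (X, Y) = (Z, Zb) \/ (X, Y) = (Z, T) \/ (X, Y) = (Zb, T) ->
       Defs.d1 th1 X Y p =
         wedge th1 om X Y p + wedge th (fscale Atau (fconj th1)) X Y p) /\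
    (forall X, X = Z \/ X = Zb \/ X = T ->
       ev om X p + ev (fconj om) X p = app X (hE A1 B1 A2 B2) p / hE A1 B1 A2 B2 p).

Lemma omZb q : M_ q -> ev om Zb q = 0.
Proof.
  intros Hq. assert (H := proj1 (HTWp q Hq) Z Zb (or_introl eq_refl)).
  rewrite d1th1_ZZb in H by exact Hq. unfold wedge in H.
  rewrite ev_th_Z, ev_th_Zb in H. destruct (Hth1M q Hq) as [_ [H1 H2]].
  rewrite H1, H2 in H. cbv beta in H.
  transitivity (- (0 - (1 * ev om Zb q - 0 * ev om Z q + (0 * ev (fscale Atau (fconj th1)) Zb q
      - 0 * ev (fscale Atau (fconj th1)) Z q)))). ring.
  rewrite <- H. ring.
Qed.

Lemma omZ q : M_ q -> ev om Z q * D_ q = E_ q.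
Proof.
  intros Hq. assert (H := proj2 (HTWp q Hq) Z (or_introl eq_refl)).
  rewrite hE_D, appZ_D, ev_fconj_Z, (omZb q Hq), conjR in H.
  transitivity ((ev om Z q + 0) * D_ q). ring. rewrite H. field. exact (Dfun_nz q Hq).
Qed.


Lemma Tder_gen (f h : CFun) q : G f q -> G h q ->
  (forall x, M_ x -> D_ x * f x = h x) -> M_ q ->
  D_ q * app Z f q = app Z h q - E_ q * f q.
Proof.
  intros Gf Gh Hfh Hq.
  assert (HL : app Z (fun x => D_ x * f x + - h x) q = 0).
  { apply (LC' A1 B1 A2 B2 Z _ (RtoC 0) q HA1 HB1 HA2 HB2).
    - apply G_plus. apply G_mult. apply G_Dfun. exact Gf. apply G_opp. exact Gh.
    - intros x Hx. rewrite (Hfh x Hx). ring.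
    - exact Hq.
    - apply appZ_U. }
  rewrite app_plus, app_opp, app_mult, appZ_D in HL.
  - apply zero_eq. rewrite <- HL. ring.
  - apply DRC_Dfun.
  - exact (G_DRC _ _ Gf).
  - apply DRC_mult. apply DRC_Dfun. exact (G_DRC _ _ Gf).
  - apply DRC_opp. exact (G_DRC _ _ Gh).
Qed.

Lemma Tder1 q : M_ q -> D_ q * app Z (vz1 T) q = Ci * al2_ * (al1_ * b_ q) - E_ q * vz1 T q.
Proof.
  intros Hq. rewrite (Tder_gen (vz1 T) (fun x => Ci * al2_ * ab_ x) q (GT1 q)).
  - rewrite app_cmul, app_abF. vzrw. ring. apply DRC_abF.
  - apply G_mult. apply G_const. apply G_abF.
  - intros x Hx. exact (proj1 (Tval x Hx)).
  - exact Hq.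
Qed.
Lemma Tder2 q : M_ q -> D_ q * app Z (vz2 T) q = Ci * al1_ * (al2_ * - a_ q) - E_ q * vz2 T q.
Proof.
  intros Hq. rewrite (Tder_gen (vz2 T) (fun x => Ci * al1_ * bb_ x) q (GT2 q)).
  - rewrite app_cmul, app_bbF. vzrw. ring. apply DRC_bbF.
  - apply G_mult. apply G_const. apply G_bbF.
  - intros x Hx. exact (proj2 (Tval x Hx)).
  - exact Hq.
Qed.
Lemma Tder3 q : M_ q -> D_ q * app Z (vzb1 T) q = - Ci * al2_ * (be1_ * b_ q) - E_ q * vzb1 T q.
Proof.
  intros Hq. rewrite (Tder_gen (vzb1 T) (fun x => - Ci * al2_ * a_ x) q (GT3 q)).
  - rewrite app_cmul, app_aF. vzrw. ring. apply DRC_aF.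
  - apply G_mult. apply G_const. apply G_aF.
  - intros x Hx. exact (proj1 (Tvalb x Hx)).
  - exact Hq.
Qed.
Lemma Tder4 q : M_ q -> D_ q * app Z (vzb2 T) q = - Ci * al1_ * (be2_ * - a_ q) - E_ q * vzb2 T q.
Proof.
  intros Hq. rewrite (Tder_gen (vzb2 T) (fun x => - Ci * al1_ * b_ x) q (GT4 q)).
  - rewrite app_cmul, app_bF. vzrw. ring. apply DRC_bF.
  - apply G_mult. apply G_const. apply G_bF.
  - intros x Hx. exact (proj2 (Tvalb x Hx)).
  - exact Hq.
Qed.


Ltac pure p := unfold Dfun, Efun, Ebfun;
  generalize (aF A1 B1 p) (abF A1 B1 p) (bF A2 B2 p) (bbF A2 B2 p) (al1 A1 B1) (al2 A2 B2) (be1 A1 B1) (be2 A2 B2);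
  intros; apply Ceq; unfold Re, Im; simpl; ring.

Definition Mmu p := 2 * Ci * al1_ * al2_ * D_ p
  - Ci * (al1_ * al1_ * be2_ * bb_ p * bb_ p + al2_ * al2_ * be1_ * ab_ p * ab_ p).
Definition Nnu p := - Ci * al1_ * al2_ * (be1_ * b_ p * b_ p + be2_ * a_ p * a_ p).

Lemma thV p : M_ p -> (D_ p * D_ p) * ev th1 (bracket Z T) p = Mmu p.
Proof.
  intros Hp. destruct (Tval p Hp) as [T1 T2]. destruct (Tvalb p Hp) as [T3 T4].
  rewrite (ev_comb th1 (bracket Z T) Z Zb p (D_ p * D_ p) (Mmu p) (Nnu p)).
  - destruct (Hth1M p Hp) as [_ [H1 H2]]. rewrite H1, H2. ring.
  - unfold bracket; cbn [vz1]. rewrite vz1_Z, app_bF. vzrw.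
    transitivity (D_ p * (D_ p * app Z (vz1 T) p) - D_ p * (be2_ * (D_ p * vz2 T p) + al2_ * (D_ p * vzb2 T p))). ring.
    rewrite Tder1 by exact Hp.
    transitivity (D_ p * (Ci * al2_ * (al1_ * b_ p)) - E_ p * (D_ p * vz1 T p) - D_ p * (be2_ * (D_ p * vz2 T p) + al2_ * (D_ p * vzb2 T p))). ring.
    rewrite T1, T2, T4. unfold Mmu, Nnu. pure p.
  - unfold bracket; cbn [vz2]. rewrite vz2_Z, app_opp, app_aF. vzrw.
    transitivity (D_ p * (D_ p * app Z (vz2 T) p) + D_ p * (be1_ * (D_ p * vz1 T p) + al1_ * (D_ p * vzb1 T p))). ring.
    rewrite Tder2 by exact Hp.
    transitivity (D_ p * (Ci * al1_ * (al2_ * - a_ p)) - E_ p * (D_ p * vz2 T p) + D_ p * (be1_ * (D_ p * vz1 T p) + al1_ * (D_ p * vzb1 T p))). ring.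
    rewrite T1, T2, T3. unfold Mmu, Nnu. pure p.
  - unfold bracket; cbn [vzb1]. rewrite vzb1_Z, app_const. vzrw.
    transitivity (D_ p * (D_ p * app Z (vzb1 T) p)). ring.
    rewrite Tder3 by exact Hp.
    transitivity (D_ p * (- Ci * al2_ * (be1_ * b_ p)) - E_ p * (D_ p * vzb1 T p)). ring.
    rewrite T3. unfold Mmu, Nnu. pure p.
  - unfold bracket; cbn [vzb2]. rewrite vzb2_Z, app_const. vzrw.
    transitivity (D_ p * (D_ p * app Z (vzb2 T) p)). ring.
    rewrite Tder4 by exact Hp.
    transitivity (D_ p * (- Ci * al1_ * (be2_ * - a_ p)) - E_ p * (D_ p * vzb2 T p)). ring.
    rewrite T4. unfold Mmu, Nnu. pure p.
Qed.


Lemma omT p : M_ p -> (D_ p * D_ p) * ev om T p = - Mmu p.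
Proof.
  intros Hp. assert (H := proj1 (HTWp p Hp) Z T (or_intror (or_introl eq_refl))).
  unfold wedge in H. rewrite !ev_fscale, ev_fconj_Z in H. rewrite ev_th_Z in H. cbv beta in H.
  destruct (Hth1M p Hp) as [H0 [H1 H2]]. rewrite H0, H1, H2, conjR in H.
  rewrite (proj1 (proj2 (HTM p Hp))) in H.
  assert (Hd : Defs.d1 th1 Z T p = - ev th1 (bracket Z T) p).
  { unfold Defs.d1.
    rewrite (LC' A1 B1 A2 B2 Z (ev th1 T) (RtoC 0) p HA1 HB1 HA2 HB2 (Gev_T th1 p Hth1C)).
    rewrite (LC' A1 B1 A2 B2 T (ev th1 Z) (RtoC 1) p HA1 HB1 HA2 HB2 (Gev_Z th1 p Hth1C)).
    ring.
    - intros x Hx. exact (proj1 (proj2 (Hth1M x Hx))).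
    - exact Hp.
    - exact (proj1 (HTM p Hp)).
    - intros x Hx. exact (proj1 (Hth1M x Hx)).
    - exact Hp.
    - apply appZ_U. }
  rewrite Hd in H. rewrite <- (thV p Hp).
  transitivity ((D_ p * D_ p) * (1 * ev om T p - 0 * ev om Z p +
      (0 * (Atau p * ev (fconj th1) T p) - 1 * (Atau p * 0)))). ring.
  rewrite <- H. ring.
Qed.

Hypothesis HW : IsWebsterCurv A1 B1 A2 B2 T th1 om Rc.

Definition Pfin p := 2 * al1_ * al2_ * D_ p * D_ p * D_ p
  - D_ p * D_ p * (al2_ * be1_ * be1_ * b_ p * bb_ p + al1_ * be2_ * be2_ * a_ p * ab_ p)
  + D_ p * E_ p * Eb_ p.

Lemma Rc_formula p : M_ p -> RtoC (Rc p) * (D_ p * D_ p * D_ p * D_ p) = Pfin p.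
Proof.
  intros Hp. destruct (HW p Hp) as [beta Hb].
  specialize (Hb Z Zb (or_introl eq_refl)).
  unfold wedge in Hb. rewrite ev_th_Z, ev_th_Zb, ev_fconj_Z, ev_fconj_Zb in Hb. cbv beta in Hb.
  destruct (Hth1M p Hp) as [H0 [H1 H2]]. rewrite H1, H2, !conjR, hE_D in Hb.
  (* Hb : d1 om Z Zb p - Rc * D * (1 * 1 - 0 * 0) = 0 * _ - 0 * _ *)
  assert (HY : Defs.d1 om Z Zb p = RtoC (Rc p) * D_ p).
  { apply zero_eq. transitivity (Defs.d1 om Z Zb p - RtoC (Rc p) * D_ p * (1 * 1 - 0 * 0)). ring.
    rewrite Hb. ring. }
  unfold Defs.d1 in HY.
  rewrite (WT p Hp) in HY.
  rewrite (LC' A1 B1 A2 B2 Z (ev om Zb) (RtoC 0) p HA1 HB1 HA2 HB2 (Gev_Zb om p HomC)) in HY.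
  2:{ intros x Hx. exact (omZb x Hx). }
  2:{ exact Hp. }
  2:{ apply appZ_U. }
  assert (Hw : D_ p * app Zb (ev om Z) p = app Zb E_ p - Eb_ p * ev om Z p).
  { assert (HL : app Zb (fun x => ev om Z x * D_ x + - E_ x) p = 0).
    { apply (LC' A1 B1 A2 B2 Zb _ (RtoC 0) p HA1 HB1 HA2 HB2).
      - apply G_plus. apply G_mult. apply Gev_Z. exact HomC. apply G_Dfun. apply G_opp. apply G_Efun.
      - intros x Hx. rewrite (omZ x Hx). ring.
      - exact Hp.
      - apply appZb_U. }
    rewrite app_plus, app_opp, app_mult, appZb_D in HL.
    - apply zero_eq. rewrite <- HL. ring.
    - exact (G_DRC _ _ (Gev_Z om p HomC)).
    - apply DRC_Dfun.
    - apply DRC_mult. exact (G_DRC _ _ (Gev_Z om p HomC)). apply DRC_Dfun.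
    - apply DRC_opp. apply DRC_Efun. }
  rewrite appZb_E in Hw.
  assert (HZ := omZ p Hp). assert (HT := omT p Hp).
  transitivity (D_ p * D_ p * D_ p * (RtoC (Rc p) * D_ p)). ring.
  rewrite <- HY.
  transitivity (- (D_ p * D_ p) * (D_ p * app Zb (ev om Z) p) + Ci * (D_ p * D_ p) * (D_ p * D_ p * ev om T p)). ring.
  rewrite Hw, HT.
  transitivity (- (D_ p * D_ p) * ((al2_ * be1_ * (be1_ * bb_ p * b_ p - al2_ * ab_ p * ab_ p)
     - al1_ * be2_ * (al1_ * bb_ p * bb_ p - be2_ * a_ p * ab_ p))) + D_ p * Eb_ p * (ev om Z p * D_ p)
     + Ci * (D_ p * D_ p) * - Mmu p). ring.
  rewrite HZ. unfold Pfin, Mmu. pure p.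
Qed.


Lemma Eb_conj q : Eb_ q = Cconj (E_ q).
Proof.
  unfold Ebfun, Efun. rewrite Cminus_conj, !Cmult_conj, conj_al1, conj_al2, conj_be1, conj_be2,
    conj_aF, conj_bF, conj_abF, conj_bbF. ring.
Qed.

Lemma Rc_pos p : M_ p -> (0 < Rc p)%R.
Proof.
  intros Hp. assert (H := Rc_formula p Hp).
  assert (Hd := Dr_pos p Hp). assert (HD := Dreal p).
  set (c1 := ((A1 + B1) / 2)%R). set (c2 := ((A2 + B2) / 2)%R).
  set (e1 := ((A1 - B1) / 2)%R). set (e2 := ((A2 - B2) / 2)%R).
  set (na := ((A1 * coord p 0) ^ 2 + (B1 * coord p 1) ^ 2)%R).
  set (nb := ((A2 * coord p 2) ^ 2 + (B2 * coord p 3) ^ 2)%R).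
  set (ne := (fst (E_ p) ^ 2 + snd (E_ p) ^ 2)%R).
  assert (Hdd : Dr p = (c2 * na + c1 * nb)%R) by (unfold Dr, na, nb, c1, c2; ring).
  assert (K1 : fst (RtoC (Rc p) * (D_ p * D_ p * D_ p * D_ p)) = (Rc p * Dr p ^ 4)%R).
  { rewrite HD. simpl. ring. }
  assert (K2 : fst (Pfin p) = (2 * c1 * c2 * Dr p ^ 3 - Dr p ^ 2 * (c2 * e1 ^ 2 * nb + c1 * e2 ^ 2 * na)
                 + Dr p * ne)%R).
  { unfold Pfin. rewrite Eb_conj. rewrite HD. unfold ne.
    set (Ex := E_ p). clearbody Ex.
    unfold na, nb, c1, c2, e1, e2, al1, al2, be1, be2, aF, abF, bF, bbF, Lin, zf1, zf2, Dr.
    destruct p as [[[x1 y1] x2] y2]. destruct Ex as [er ei]. simpl. field. }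
  rewrite H in K1. rewrite K1 in K2.
  assert (Hne : (0 <= ne)%R) by (unfold ne; nra).
  assert (Hna : (0 <= na)%R) by (unfold na; nra).
  assert (Hnb : (0 <= nb)%R) by (unfold nb; nra).
  assert (Hc1 : (0 < c1)%R) by (unfold c1; lra). assert (Hc2 : (0 < c2)%R) by (unfold c2; lra).
  assert (He1 : (e1 ^ 2 <= c1 ^ 2)%R) by (unfold e1, c1; nra).
  assert (He2 : (e2 ^ 2 <= c2 ^ 2)%R) by (unfold e2, c2; nra).
  set (d := Dr p) in *.
  assert (HS : (c2 * e1 ^ 2 * nb + c1 * e2 ^ 2 * na <= c1 * c2 * d)%R).
  { rewrite Hdd.
    assert (c2 * e1 ^ 2 * nb <= c2 * c1 ^ 2 * nb)%R.
    { apply Rmult_le_compat_r. exact Hnb. apply Rmult_le_compat_l; lra. }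
    assert (c1 * e2 ^ 2 * na <= c1 * c2 ^ 2 * na)%R.
    { apply Rmult_le_compat_r. exact Hna. apply Rmult_le_compat_l; lra. }
    nra. }
  assert (Hd2 : (0 < d ^ 2)%R) by nra.
  assert (Hd3 : (0 < d ^ 3)%R) by (simpl; nra).
  assert (Hd4 : (0 < d ^ 4)%R) by (simpl; nra).
  assert (Hlow : (c1 * c2 * d ^ 3 <= Rc p * d ^ 4)%R).
  { rewrite K2. assert (d ^ 2 * (c2 * e1 ^ 2 * nb + c1 * e2 ^ 2 * na) <= d ^ 2 * (c1 * c2 * d))%R.
    { apply Rmult_le_compat_l. lra. exact HS. }
    assert (0 <= d * ne)%R by nra.
    assert (d ^ 3 = d ^ 2 * d)%R by ring. nra. }
  assert (Hpos : (0 < c1 * c2 * d ^ 3)%R).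
  { apply Rmult_lt_0_compat. apply Rmult_lt_0_compat; lra. exact Hd3. }
  destruct (Rlt_or_le 0 (Rc p)) as [Hr | Hr]. exact Hr.
  exfalso. assert (Rc p * d ^ 4 <= 0)%R by nra. lra.
Qed.

End Main2.

Close Scope C_scope.
Open Scope R_scope.

Theorem mainTheorem4 (A1 B1 A2 B2 : R) :
  (0 < A1)%R -> (0 < B1)%R -> (0 < A2)%R -> (0 < B2)%R ->
  forall (T : VF) (th1 om : Form) (Rc : pt -> R),
    IsReeb A1 B1 A2 B2 T ->
    IsCoframe A1 B1 A2 B2 T th1 ->
    IsTWconn A1 B1 A2 B2 T th1 om ->
    IsWebsterCurv A1 B1 A2 B2 T th1 om Rc ->
    forall p : pt, onM A1 B1 A2 B2 p -> (0 < Rc p)%R.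
Proof.
  intros HA1 HB1 HA2 HB2 T th1 om Rc [HTC [Hreal HTM]] [Hth1C Hth1M] [HomC [Atau HTWp]] HW p Hp.
  exact (Rc_pos A1 B1 A2 B2 HA1 HB1 HA2 HB2 T th1 om Rc Atau HTC Hreal HTM Hth1C Hth1M HomC HTWp HW p Hp).
Qed.
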